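(* Let $K=10_{164}$, with Alexander polynomial $\Delta_K(t)=3-11t+17t^2-11t^3+3t^4$. There exists an epimorphism $\alpha\colon\pi_K\to D_3$ such that \[\Delta_K^{\varrho\circ\alpha}(t)\doteq\frac{(3-11t+17t^2-11t^3+3t^4)(3-13t^2+13t^4-3t^6)}{t-1},\] and consequently there is no polynomial $f(t)$ with integer coefficients such that $\Delta_K^{\varrho\circ\alpha}(t)\doteq\frac{\Delta_K(t)}{1-t}f(t)f(-t)$. (Explicitly, $\alpha$ may be taken to send the Wirtinger generators $a,\dots,k$ of the closure of the braid $\sigma_1\sigma_2^{-1}\sigma_3^2\sigma_2^{-1}\sigma_1\sigma_2^{-1}\sigma_3^{-1}\sigma_2^{-1}\sigma_1\sigma_2^{-1}$ — with relators $b^{-1}a^{-1}ea$, $a^{-1}cfc^{-1}$, $d^{-1}f^{-1}gf$, $f^{-1}g^{-1}hg$, $c^{-1}hih^{-1}$, $h^{-1}e^{-1}je$, $e^{-1}iki^{-1}$, $k^{-1}gdg^{-1}$, $i^{-1}gbg^{-1}$, $g^{-1}j^{-1}aj$ — to $a,c,f,k\mapsto xy^2$; $b,g,i\mapsto x$; $d,e,h,j\mapsto xy$.)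
   Context: $D_3=\langle x,y\mid x^2=y^3=1,\ xyx=y^{-1}\rangle$, acting on $\mathbb Z/3$ by $y\cdot n=n-1$, $x\cdot n=-n$; $\varrho\colon D_3\to\mathrm{GL}(3,\mathbb Z)$ is the associated permutation representation. $\pi_K=\pi_1(S^3\setminus\nu K)$. Twisted Alexander polynomial (Wada's invariant): let $\phi\colon\pi_K\to\mathbb Z$ send the oriented meridian to $1$; for $\alpha\colon\pi_K\to\mathrm{Aut}(V)$, $V$ a finitely generated free module over a UFD $R$ with quotient field $Q$, let $\alpha\otimes\phi$ act on $V\otimes_R R[t^{\pm1}]$ by $g\mapsto(v\otimes f\mapsto\alpha(g)v\otimes t^{\phi(g)}f)$. For a deficiency-one presentation $\langle g_1,\dots,g_{k+1}\mid r_1,\dots,r_k\rangle$ of $\pi_K$ with Fox matrix $M=(\partial r_i/\partial g_j)$ and $M_i$ obtained by deleting column $i$ with $\phi(g_i)\ne0$, set $\Delta_K^\alpha(t)=\det((\alpha\otimes\phi)(M_i))\det((\alpha\otimes\phi)(1-g_i))^{-1}\in Q(t)$; it is well defined up to multiplication by $\pm t^k$ here, and $\doteq$ denotes equality up to this indeterminacy. *)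

(* Defs.v *)
From HB Require Import structures.
From mathcomp Require Import all_boot all_order all_algebra all_fingroup.
From mathcomp Require Import fraction.
Set Implicit Arguments. Unset Strict Implicit. Unset Printing Implicit Defensive.
Import GRing.Theory.
Local Open Scope ring_scope.

(* The dihedral group D_3, realised (faithfully) through its action on *)
(* Z/3.  Elements are permutations of 'Z_3 (mathcomp product).  The    *)
(* LEFT action of g on n is  g . n := g^-1 n  (so that                 *)
(* (g*h) . n = g . (h . n)).                                           *)
Definition D3 := {perm 'Z_3}.
Definition D3act (g : D3) (n : 'Z_3) : 'Z_3 := (g^-1)%g n.

(* the generators: x . n = -n, y . n = n - 1 *)
Definition D3x : D3 := perm (inv_inj (@opprK 'Z_3)).
Definition D3y : D3 := perm (can_inj (@addrK 'Z_3 1)).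

(* permutation representation rho : D_3 -> GL(3,Z):  rho(g) e_n = e_{g.n} *)
Definition rho (g : D3) : 'M[int]_3 :=
  \matrix_(m < 3, n < 3) ((inZp m : 'Z_3) == D3act g (inZp n))%:R.

(* Finite presentations: words in the generators 'I_N                   *)
(* (a letter (g, false) is g, a letter (g, true) is g^-1).              *)
Definition word (N : nat) := seq ('I_N * bool).

Definition evalD (N : nat) (al : 'I_N -> D3) (w : word N) : D3 :=
  foldr (fun l acc => ((if l.2 then (al l.1)^-1 else al l.1) * acc)%g) 1%g w.

Definition Qt := {fraction {poly rat}}.
Definition tQ : Qt := tofrac ('X : {poly rat}).
Definition polyQ (f : {poly int}) : Qt := tofrac (map_poly (fun z : int => z%:~R) f).

(* (alpha (x) phi)(g) for a generator g, with values in GL(d, Q(t)) *)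
Definition repgen (N d : nat) (A : 'I_N -> 'M[int]_d) (phi : 'I_N -> int)
  (g : 'I_N) : 'M[Qt]_d :=
  (tQ ^ (phi g)) *: map_mx (fun z : int => z%:~R) (A g).

Definition repletter (N d : nat) (A : 'I_N -> 'M[int]_d) (phi : 'I_N -> int)
  (l : 'I_N * bool) : 'M[Qt]_d :=
  if l.2 then invmx (repgen A phi l.1) else repgen A phi l.1.

(* image under alpha (x) phi of the Fox derivative  d w / d g_j,
   using d(uv) = du + u dv,  d g_j/d g_j = 1,  d g_j^-1/d g_j = - g_j^-1 *)
Fixpoint foxmx (N d : nat) (A : 'I_N -> 'M[int]_d) (phi : 'I_N -> int)
  (w : word N) (j : 'I_N) : 'M[Qt]_d :=
  match w with
  | [::] => 0
  | l :: w' =>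
      (if l.1 == j then (if l.2 then - repletter A phi l else 1) else 0)
      + repletter A phi l *m foxmx A phi w' j
  end.

(* Wada's invariant for a deficiency-one presentation
   < g_0, ..., g_n | r_0, ..., r_(n-1) >, deleting the column of g_0
   (which must satisfy phi g_0 <> 0):
   det((alpha(x)phi)(M_0)) / det((alpha(x)phi)(1 - g_0)). *)
Definition wada (n d : nat) (rels : 'I_n -> word n.+1)
  (A : 'I_n.+1 -> 'M[int]_d) (phi : 'I_n.+1 -> int) : Qt :=
  \det (@mxblock Qt n n (fun _ => d) (fun _ => d)
          (fun (i j : 'I_n) => foxmx A phi (rels i) (lift ord0 j)))
  / \det (1 - repgen A phi ord0).

Definition eqdot (p q : Qt) : Prop :=
  exists (s : bool) (k : int), p = (-1) ^+ s * tQ ^ k * q.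

(* The knot K = 10_164: Wirtinger presentation from the closure of     *)
(* sigma1 sigma2^-1 sigma3^2 sigma2^-1 sigma1 sigma2^-1 sigma3^-1      *)
(* sigma2^-1 sigma1 sigma2^-1, generators a..k = 0..10.                 *)
Definition gen (k : nat) : 'I_11 := inord k.
Definition P (k : nat) : 'I_11 * bool := (gen k, false).
Definition M (k : nat) : 'I_11 * bool := (gen k, true).
Definition K_rels_seq : seq (word 11) :=
  [:: [:: M 1; M 0; P 4; P 0];
      [:: M 0; P 2; P 5; M 2];
      [:: M 3; M 5; P 6; P 5];
      [:: M 5; M 6; P 7; P 6];
      [:: M 2; P 7; P 8; M 7];
      [:: M 7; M 4; P 9; P 4];
      [:: M 4; P 8; P 10; M 8];
      [:: M 10; P 6; P 3; M 6];
      [:: M 8; P 6; P 1; M 6];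
      [:: M 6; M 9; P 0; P 9] ].
Definition K_rels (i : 'I_10) : word 11 := nth [::] K_rels_seq i.

Definition K_phi (g : 'I_11) : int := 1.

Definition DeltaK : {poly int} := Poly [:: 3; -11; 17; -11; 3].
Definition Fac2 : {poly int} := Poly [:: 3; 0; -13; 0; 13; 0; -3].

(* Main.v *)
Require Import Defs.
From Stdlib Require Import ZArith.
From HB Require Import structures.
From mathcomp Require Import all_boot all_order all_algebra all_fingroup fraction.
From mathcomp Require Import zify ring lra.
From mathcomp.zify Require Import ssrZ.
Import GRing.Theory Num.Theory.
Local Open Scope ring_scope.

Definition za (z : Z) : Qt := (int_of_Z z)%:~R.
Lemma zaD a b : za (Z.add a b) = za a + za b.
Proof. by rewrite /za (_ : int_of_Z (Z.add a b) = int_of_Z a + int_of_Z b) ?intrD //; lia. Qed.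
Lemma zaM a b : za (Z.mul a b) = za a * za b.
Proof. by rewrite /za (_ : int_of_Z (Z.mul a b) = int_of_Z a * int_of_Z b) ?intrM //; nia. Qed.
Lemma zaN a : za (Z.opp a) = - za a.
Proof. by rewrite /za (_ : int_of_Z (Z.opp a) = - int_of_Z a) ?mulrNz //; lia. Qed.
Lemma za0 : za Z0 = 0. Proof. by []. Qed.
Lemma za1 : za (Zpos xH) = 1. Proof. by rewrite /za /= mulr1z. Qed.

Fixpoint evP (l : seq Z) : Qt := if l is a :: l' then za a + tQ * evP l' else 0.

Fixpoint padd (p q : seq Z) : seq Z :=
  match p, q with
  | [::], _ => q
  | _, [::] => p
  | a :: p', b :: q' => Z.add a b :: padd p' q'
  end.
Definition pscal (a : Z) (q : seq Z) := map (Z.mul a) q.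
Fixpoint pmul (p q : seq Z) : seq Z :=
  if p is a :: p' then padd (pscal a q) (Z0 :: pmul p' q) else [::].
Definition popp (q : seq Z) := map Z.opp q.

Lemma evP_add p q : evP (padd p q) = evP p + evP q.
Proof.
elim: p q => [|a p IH] [|b q] /=; rewrite ?add0r ?addr0 //.
by rewrite IH zaD mulrDr addrACA.
Qed.
Lemma evP_scal a q : evP (pscal a q) = za a * evP q.
Proof.
elim: q => [|b q IH] /=; first by rewrite mulr0.
by rewrite IH zaM mulrDr mulrCA.
Qed.
Lemma evP_opp q : evP (popp q) = - evP q.
Proof. elim: q => [|b q IH] /=; first by rewrite oppr0. by rewrite IH zaN opprD mulrN. Qed.
Lemma evP_mul p q : evP (pmul p q) = evP p * evP q.
Proof.
elim: p => [|a p IH] /=; first by rewrite mul0r.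
by rewrite evP_add evP_scal /= IH za0 add0r mulrDl mulrA.
Qed.
Lemma evP_shift n q : evP (nseq n Z0 ++ q) = tQ ^+ n * evP q.
Proof.
elim: n => [|n IH] /=; first by rewrite mul1r.
by rewrite za0 add0r IH exprS mulrA.
Qed.
Lemma evP_zero q : all (Z.eqb 0) q -> evP q = 0.
Proof.
elim: q => [|b q IH] //= /andP [H1 /IH ->].
have <- : Z0 = b by apply/Z.eqb_eq.
by rewrite za0 mulr0 addr0.
Qed.

Lemma tQ_neq0 : tQ != 0.
Proof. by rewrite /tQ tofrac_eq0 polyX_eq0. Qed.

Definition lp := (Z * seq Z)%type.
Definition evL (p : lp) : Qt := tQ ^ (int_of_Z p.1) * evP p.2.
Definition lp0 : lp := (Z0, [::]).
Definition lpadd (p q : lp) : lp :=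
  if Z.leb p.1 q.1 then (p.1, padd p.2 (nseq (Z.to_nat (Z.sub q.1 p.1)) Z0 ++ q.2))
  else (q.1, padd (nseq (Z.to_nat (Z.sub p.1 q.1)) Z0 ++ p.2) q.2).
Definition lpmul (p q : lp) : lp := (Z.add p.1 q.1, pmul p.2 q.2).
Definition lpopp (p : lp) : lp := (p.1, popp p.2).
Definition lpzero (p : lp) := all (Z.eqb 0) p.2.
Definition lpeqb p q := lpzero (lpadd p (lpopp q)).

Lemma evL0 : evL lp0 = 0. Proof. by rewrite /evL /= mulr0. Qed.
Lemma expzD' (a b : Z) : tQ ^ int_of_Z (Z.add a b) = tQ ^ int_of_Z a * tQ ^ int_of_Z b.
Proof.
rewrite (_ : int_of_Z (Z.add a b) = int_of_Z a + int_of_Z b); last by lia.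
by rewrite expfzDr // tQ_neq0.
Qed.
Lemma expn_z n : tQ ^+ n = tQ ^ (n%:Z).
Proof. by []. Qed.
Lemma evL_add p q : evL (lpadd p q) = evL p + evL q.
Proof.
case: p q => [e1 l1] [e2 l2]; rewrite /lpadd /evL /=.
case: (Z.leb_spec e1 e2) => H /=; rewrite evP_add evP_shift mulrDr mulrA expn_z.
  congr (_ + _); congr (_ * _); rewrite -expfzDr ?tQ_neq0 //; congr (_ ^ _); lia.

congr (_ + _); congr (_ * _); rewrite -expfzDr ?tQ_neq0 //; congr (_ ^ _); lia.
Qed.
Lemma evL_mul p q : evL (lpmul p q) = evL p * evL q.
Proof.
case: p q => [e1 l1] [e2 l2]; rewrite /lpmul /evL /= evP_mul expzD'.
by rewrite mulrACA.
Qed.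
Lemma evL_opp p : evL (lpopp p) = - evL p.
Proof. by case: p => e l; rewrite /evL /= evP_opp mulrN. Qed.
Lemma evL_zero p : lpzero p -> evL p = 0.
Proof. by case: p => e l; rewrite /lpzero /evL /= => /evP_zero ->; rewrite mulr0. Qed.
Lemma evL_eq p q : lpeqb p q -> evL p = evL q.
Proof. by move=> /evL_zero; rewrite evL_add evL_opp => /eqP; rewrite subr_eq0 => /eqP. Qed.

Definition mxF n (f : nat -> nat -> lp) : 'M[Qt]_n := \matrix_(i < n, j < n) evL (f i j).
Definition lpsum (s : seq lp) := foldr lpadd lp0 s.
Definition lp1 : lp := (Z0, [:: Zpos xH]).
Definition lpprod (s : seq lp) := foldr lpmul lp1 s.
Definition prodF n (f g : nat -> nat -> lp) : nat -> nat -> lp :=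
  fun i j => lpsum (map (fun k => lpmul (f i k) (g k j)) (iota 0 n)).
Definition addF (f g : nat -> nat -> lp) : nat -> nat -> lp := fun i j => lpadd (f i j) (g i j).
Definition oppF (f : nat -> nat -> lp) : nat -> nat -> lp := fun i j => lpopp (f i j).
Definition idF : nat -> nat -> lp := fun i j => if i == j then lp1 else lp0.
Definition zeroF : nat -> nat -> lp := fun _ _ => lp0.
Definition eqF n (f g : nat -> nat -> lp) :=
  all (fun i => all (fun j => lpeqb (f i j) (g i j)) (iota 0 n)) (iota 0 n).
Definition lowF n (f : nat -> nat -> lp) :=
  all (fun i => all (fun j => (i < j)%N ==> lpzero (f i j)) (iota 0 n)) (iota 0 n).
Definition diagprod n (f : nat -> nat -> lp) := lpprod (map (fun i => f i i) (iota 0 n)).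

Lemma evL1 : evL lp1 = 1.
Proof. by rewrite /evL /= za1 mulr0 addr0 mulr1. Qed.
Lemma evL_sum (s : seq lp) : evL (lpsum s) = \sum_(x <- s) evL x.
Proof. elim: s => [|x s IH]; first by rewrite big_nil evL0. by rewrite big_cons -IH -evL_add. Qed.
Lemma evL_prod (s : seq lp) : evL (lpprod s) = \prod_(x <- s) evL x.
Proof. elim: s => [|x s IH]; first by rewrite big_nil evL1. by rewrite big_cons -IH -evL_mul. Qed.

Lemma sum_iota n (F : nat -> Qt) : \sum_(k < n) F k = \sum_(k <- iota 0 n) F k.
Proof. by rewrite -(big_mkord xpredT) /index_iota subn0. Qed.
Lemma prod_iota n (F : nat -> Qt) : \prod_(k < n) F k = \prod_(k <- iota 0 n) F k.
Proof. by rewrite -(big_mkord xpredT) /index_iota subn0. Qed.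

Lemma mxF_mul n f g : mxF n f *m mxF n g = mxF n (prodF n f g).
Proof.
apply/matrixP => i j; rewrite /mxF !mxE evL_sum big_map.

rewrite (eq_bigr (fun k : 'I_n => evL (f i k) * evL (g k j))); last by move=> k _; rewrite !mxE.
etransitivity; first exact: (sum_iota n (fun k => evL (f i k) * evL (g k j))).
by apply: eq_bigr => k _; rewrite evL_mul.
Qed.
Lemma mxF_add n f g : mxF n (addF f g) = mxF n f + mxF n g.
Proof. by apply/matrixP => i j; rewrite /mxF !mxE evL_add. Qed.
Lemma mxF_opp n f : mxF n (oppF f) = - mxF n f.
Proof. by apply/matrixP => i j; rewrite /mxF !mxE evL_opp. Qed.
Lemma mxF_id n : mxF n idF = 1%:M.
Proof. by apply/matrixP => i j; rewrite /mxF !mxE /idF; case: eqP => [/val_inj ->|]; rewrite ?eqxx ?evL1 ?evL0 //; case: eqP => // ->. Qed.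
Lemma mxF_zero n : mxF n zeroF = 0.
Proof. by apply/matrixP => i j; rewrite /mxF !mxE evL0. Qed.
Lemma mxF_tr n f : mxF n (fun i j => f j i) = (mxF n f)^T.
Proof. by apply/matrixP => i j; rewrite /mxF !mxE. Qed.

Lemma mem_iota0 n (i : 'I_n) : (nat_of_ord i \in iota 0 n).
Proof. by rewrite mem_iota /= ltn_ord. Qed.
Arguments mem_iota0 {n}.

Lemma eqF_mx n f g : eqF n f g -> mxF n f = mxF n g.
Proof.
move=> /allP H; apply/matrixP => i j; rewrite /mxF !mxE.
by apply: evL_eq; move/allP: (H _ (mem_iota0 i)); apply; apply: mem_iota0.
Qed.
Lemma lowF_trig n f : lowF n f -> is_trig_mx (mxF n f).
Proof.
move=> /allP H; apply/is_trig_mxP => i j lij; rewrite !mxE; apply: evL_zero.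
by move/allP: (H _ (mem_iota0 i)) => /(_ _ (mem_iota0 j)); rewrite lij.
Qed.
Lemma det_lowF n f : lowF n f -> \det (mxF n f) = evL (diagprod n f).
Proof.
move=> /lowF_trig /det_trig ->; rewrite evL_prod big_map.
rewrite (eq_bigr (fun k : 'I_n => evL (f k k))); last by move=> k _; rewrite /mxF !mxE.
exact: (prod_iota n (fun k => evL (f k k))).
Qed.

Arguments eqF_mx {n f g}.
Arguments det_lowF {n f}.
Arguments lowF_trig {n f}.

Lemma det_cert n a m am u b :
  lowF n (fun i j => a j i) -> lowF n (fun i j => u j i) -> lowF n b ->
  eqF n (prodF n a m) am -> eqF n (prodF n am u) b ->
  \det (mxF n m) * (evL (diagprod n a) * evL (diagprod n u)) = evL (diagprod n b).
Proof.
move=> ha hu hb e1 e2.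
have : mxF n a *m mxF n m *m mxF n u = mxF n b.
  by rewrite mxF_mul (eqF_mx e1) mxF_mul (eqF_mx e2).
move/(congr1 determinant); rewrite !det_mulmx (det_lowF hb) => <-.
have -> : \det (mxF n a) = evL (diagprod n a) by rewrite -det_tr -mxF_tr (det_lowF ha).
have -> : \det (mxF n u) = evL (diagprod n u) by rewrite -det_tr -mxF_tr (det_lowF hu).
ring.
Qed.

Definition cs : seq nat := [:: 0; 1; 0; 2; 2; 0; 1; 2; 1; 2; 0]%N.
Definition reflf (c : 'Z_3) (n : 'Z_3) : 'Z_3 := c - n.
Lemma reflfK c : involutive (reflf c).
Proof. by move=> n; rewrite /reflf opprB addrC subrK. Qed.
Definition refl (c : 'Z_3) : D3 := perm (inv_inj (reflfK c)).
Definition alpha (g : 'I_11) : D3 := refl (inZp (nth 0%N cs g)).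

Lemma reflE c n : refl c n = c - n.
Proof. by rewrite permE. Qed.
Lemma reflV c : ((refl c)^-1)%g = refl c.
Proof.
apply/eqP; rewrite eq_invg_mul; apply/eqP/permP => n.
by rewrite permM perm1 !reflE /reflf opprB addrC subrK.
Qed.

Lemma cs_lt3 (k : nat) : (nth 0%N cs k < 3)%N.
Proof.
have /allP H : all (fun x => x < 3)%N cs by [].
case: (ltnP k (size cs)) => hk; first by apply: H; apply: mem_nth.
by rewrite nth_default.
Qed.

Definition pmatch (c a b : nat) : bool := a == ((c + 3 - b) %% 3)%N.

Lemma inZp_match (c : nat) (a b : 'I_3) : (c < 3)%N ->
  ((inZp a : 'Z_3) == (inZp c : 'Z_3) - inZp b) = pmatch c a b.
Proof.
case: a => [[|[|[|?]]] ?] //; case: b => [[|[|[|?]]] ?] //;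
  case: c => [|[|[|?]]] //= _; vm_compute; reflexivity.
Qed.

Lemma rho_alpha g (a b : 'I_3) :
  rho (alpha g) a b = (pmatch (nth 0%N cs g) a b)%:R.
Proof.
rewrite /rho mxE /D3act /alpha reflV reflE -inZp_match ?cs_lt3 //.
Qed.

Definition lpone : lp := (Zpos xH, [:: Zpos xH]).
Definition lpinv : lp := (Zneg xH, [:: Zpos xH]).
Definition letF (k : nat) (b : bool) : nat -> nat -> lp :=
  fun i j => if pmatch (nth 0%N cs k) i j then (if b then lpinv else lpone) else lp0.

Lemma repgen_letF (g : 'I_11) :
  repgen (fun g => rho (alpha g)) K_phi g = mxF 3 (letF g false).
Proof.
apply/matrixP => i j; rewrite /repgen /mxF !mxE /D3act /alpha reflV reflE inZp_match ?cs_lt3 //.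
rewrite /letF /K_phi expr1z; case: pmatch => /=.
  by rewrite /evL /= za1 mulr0 addr0 mulr1.
by rewrite evL0 mulr0z mulr0.
Qed.

Lemma letF_inv_check : all (fun k => eqF 3 (prodF 3 (letF k false) (letF k true)) idF) (iota 0 11).
Proof. by vm_compute. Qed.

Lemma invmx_eq n (A B : 'M[Qt]_n) : A *m B = 1%:M -> invmx A = B.
Proof.
move=> AB; have uA : A \in unitmx.
  have H : \det A * \det B = 1 by rewrite -det_mulmx AB det1.
  rewrite unitmxE unitfE; apply/eqP => h; move: H; rewrite h mul0r => /eqP.
  by rewrite eq_sym oner_eq0.
by rewrite -(mulKmx uA B) AB mulmx1.
Qed.

Lemma repletter_letF (l : 'I_11 * bool) :
  repletter (fun g => rho (alpha g)) K_phi l = mxF 3 (letF l.1 l.2).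
Proof.
case: l => g [] /=; rewrite /repletter /= repgen_letF //.
apply: invmx_eq; rewrite mxF_mul -(mxF_id 3); apply: eqF_mx.
by move/allP: letF_inv_check; apply; rewrite mem_iota /= ltn_ord.
Qed.

Fixpoint foxc (w : seq (nat * bool)) (j : nat) : nat -> nat -> lp :=
  match w with
  | [::] => zeroF
  | l :: w' => addF (if l.1 == j then (if l.2 then oppF (letF l.1 l.2) else idF) else zeroF)
                    (prodF 3 (letF l.1 l.2) (foxc w' j))
  end.

Lemma foxmx_foxc (w : word 11) (j : 'I_11) :
  foxmx (fun g => rho (alpha g)) K_phi w j =
  mxF 3 (foxc (map (fun l => (nat_of_ord l.1, l.2)) w) j).
Proof.
elim: w => [|l w IH] /=; first by rewrite mxF_zero.
rewrite mxF_add -mxF_mul -IH repletter_letF.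
congr (_ + _).
case: l => g b /=; rewrite -val_eqE /=.
case: (g == j :> nat) => //; last by rewrite mxF_zero.
by case: b; rewrite ?mxF_opp ?mxF_id.
Qed.

Definition relsN : seq (seq (nat * bool)) :=
  [:: [:: (1,true);(0,true);(4,false);(0,false)];
      [:: (0,true);(2,false);(5,false);(2,true)];
      [:: (3,true);(5,true);(6,false);(5,false)];
      [:: (5,true);(6,true);(7,false);(6,false)];
      [:: (2,true);(7,false);(8,false);(7,true)];
      [:: (7,true);(4,true);(9,false);(4,false)];
      [:: (4,true);(8,false);(10,false);(8,true)];
      [:: (10,true);(6,false);(3,false);(6,true)];
      [:: (8,true);(6,false);(1,false);(6,true)];
      [:: (6,true);(9,true);(0,false);(9,false)]]%N.

Lemma relsN_ok (i : 'I_10) :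
  map (fun l => (nat_of_ord l.1, l.2)) (K_rels i) = nth [::] relsN i.
Proof.
by case: i => [[|[|[|[|[|[|[|[|[|[|?]]]]]]]]]] ?] //=; rewrite /P /M /gen !inordK.
Qed.

Definition MF (s t : nat) : lp :=
  foxc (nth [::] relsN (s %/ 3)) (t %/ 3).+1 (s %% 3) (t %% 3).

Lemma sum3 : (\sum_(i < 10) (fun _ : 'I_10 => 3%N) i = 30)%N.
Proof. by rewrite sum_nat_const card_ord. Qed.

Lemma sig_vals (s : 'I_(\sum_(i < 10) (fun _ : 'I_10 => 3%N) i)) :
  tagnat.sig1 s = (s %/ 3)%N :> nat /\ tagnat.sig2 s = (s %% 3)%N :> nat.
Proof.
have := tagnat.rect s.
rewrite (@big_ord_narrow _ _ _ (tagnat.sig1 s) 10 _ (ltnW (ltn_ord _))).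
have -> : (\sum_(i < tagnat.sig1 s) 3 = 3 * tagnat.sig1 s)%N by rewrite sum_nat_const card_ord mulnC.
move=> Hs.
have h2 : (tagnat.sig2 s < 3)%N := ltn_ord _.
split; rewrite {1}Hs [(3 * _)%N]mulnC; first by rewrite divnMDl // divn_small // addn0. by rewrite modnMDl modn_small.
Qed.

Lemma det_castmx n m (e : n = m) (A : 'M[Qt]_n) : \det (castmx (e, e) A) = \det A.
Proof. by case: m / e; rewrite castmx_id. Qed.

Lemma block_eq :
  @mxblock Qt 10 10 (fun _ => 3%N) (fun _ => 3%N)
    (fun i j => foxmx (fun g => rho (alpha g)) K_phi (K_rels i) (lift ord0 j))
  = castmx (esym sum3, esym sum3) (mxF 30 MF).
Proof.
apply/matrixP => s t; rewrite castmxE /= /mxblock mxE foxmx_foxc relsN_ok /mxF !mxE /MF /=.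
have [h1 h2] := sig_vals s; have [h3 h4] := sig_vals t.
by rewrite h1 h2 h3 h4.
Qed.

Definition tA : seq (seq lp) :=
 [::[::(Z0,[::(Zpos 1)]);(Z0,[::(Zpos 1)]);lp0;lp0;lp0;lp0;lp0;lp0;lp0;lp0;lp0;lp0;lp0;lp0;lp0;lp0;lp0;lp0;lp0;lp0;lp0;lp0;lp0;lp0;lp0;lp0;lp0;lp0;lp0;lp0];
 [::lp0;(Z0,[::(Zpos 1)]);lp0;lp0;lp0;lp0;lp0;lp0;lp0;lp0;lp0;lp0;lp0;lp0;lp0;lp0;lp0;lp0;lp0;lp0;lp0;lp0;lp0;lp0;lp0;lp0;lp0;lp0;lp0;lp0];
 [::lp0;lp0;(Z0,[::(Zpos 1)]);lp0;lp0;lp0;lp0;lp0;lp0;lp0;lp0;lp0;lp0;lp0;lp0;lp0;lp0;lp0;lp0;lp0;lp0;lp0;lp0;lp0;lp0;lp0;lp0;lp0;lp0;lp0];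
 [::lp0;lp0;lp0;(Z0,[::(Zpos 1)]);lp0;lp0;lp0;lp0;lp0;lp0;lp0;lp0;lp0;lp0;lp0;lp0;lp0;lp0;lp0;lp0;lp0;lp0;lp0;lp0;lp0;lp0;lp0;lp0;lp0;lp0];
 [::lp0;lp0;lp0;lp0;(Z0,[::(Zpos 1)]);lp0;lp0;lp0;lp0;lp0;lp0;lp0;lp0;lp0;lp0;lp0;lp0;lp0;lp0;lp0;lp0;lp0;lp0;lp0;lp0;lp0;lp0;lp0;lp0;lp0];
 [::lp0;lp0;lp0;lp0;lp0;(Z0,[::(Zpos 1)]);lp0;lp0;lp0;lp0;lp0;lp0;lp0;lp0;lp0;lp0;lp0;lp0;lp0;lp0;lp0;lp0;lp0;lp0;lp0;lp0;lp0;lp0;lp0;lp0];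
 [::lp0;lp0;lp0;lp0;lp0;lp0;(Z0,[::(Zpos 1)]);lp0;(Z0,[::(Zpos 1)]);lp0;lp0;lp0;lp0;lp0;lp0;lp0;lp0;lp0;lp0;lp0;lp0;lp0;lp0;lp0;lp0;lp0;lp0;lp0;lp0;lp0];
 [::lp0;lp0;lp0;lp0;lp0;lp0;lp0;(Z0,[::(Zpos 1)]);lp0;lp0;lp0;lp0;lp0;lp0;lp0;lp0;lp0;lp0;lp0;lp0;lp0;lp0;lp0;lp0;lp0;lp0;lp0;lp0;lp0;lp0];
 [::lp0;lp0;lp0;lp0;lp0;lp0;lp0;lp0;(Z0,[::(Zpos 1)]);lp0;lp0;lp0;lp0;lp0;lp0;lp0;lp0;lp0;lp0;lp0;lp0;lp0;lp0;lp0;lp0;lp0;lp0;lp0;lp0;lp0];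
 [::lp0;lp0;lp0;lp0;lp0;lp0;lp0;lp0;lp0;(Z0,[::(Zpos 1)]);lp0;lp0;lp0;lp0;lp0;(Z0,[::(Zpos 1)]);lp0;lp0;lp0;lp0;lp0;lp0;lp0;lp0;lp0;lp0;lp0;lp0;lp0;lp0];
 [::lp0;lp0;lp0;lp0;lp0;lp0;lp0;lp0;lp0;lp0;(Z0,[::(Zpos 1)]);lp0;lp0;lp0;lp0;lp0;(Z0,[::(Zpos 1)]);lp0;lp0;lp0;lp0;lp0;lp0;lp0;lp0;lp0;lp0;lp0;lp0;lp0];
 [::lp0;lp0;lp0;lp0;lp0;lp0;lp0;lp0;lp0;lp0;lp0;(Z0,[::(Zpos 1)]);lp0;lp0;lp0;lp0;lp0;(Z0,[::(Zpos 1)]);lp0;lp0;lp0;lp0;lp0;lp0;lp0;lp0;lp0;lp0;lp0;lp0];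
 [::lp0;lp0;lp0;lp0;lp0;lp0;lp0;lp0;lp0;lp0;lp0;lp0;(Z0,[::(Zpos 1)]);lp0;lp0;lp0;lp0;lp0;lp0;lp0;lp0;lp0;lp0;lp0;lp0;lp0;lp0;lp0;lp0;lp0];
 [::lp0;lp0;lp0;lp0;lp0;lp0;lp0;lp0;lp0;lp0;lp0;lp0;lp0;(Z0,[::(Zpos 1)]);lp0;lp0;lp0;lp0;lp0;lp0;lp0;lp0;lp0;lp0;lp0;lp0;lp0;lp0;lp0;lp0];
 [::lp0;lp0;lp0;lp0;lp0;lp0;lp0;lp0;lp0;lp0;lp0;lp0;lp0;lp0;(Z0,[::(Zpos 1)]);lp0;lp0;lp0;lp0;lp0;lp0;lp0;lp0;lp0;lp0;lp0;lp0;lp0;lp0;lp0];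
 [::lp0;lp0;lp0;lp0;lp0;lp0;lp0;lp0;lp0;lp0;lp0;lp0;lp0;lp0;lp0;(Z0,[::(Zpos 1)]);(Z0,[::(Zpos 1)]);lp0;lp0;lp0;lp0;lp0;lp0;lp0;lp0;lp0;lp0;lp0;lp0;lp0];
 [::lp0;lp0;lp0;lp0;lp0;lp0;lp0;lp0;lp0;lp0;lp0;lp0;lp0;lp0;lp0;lp0;(Z0,[::(Zpos 1)]);lp0;lp0;lp0;lp0;lp0;lp0;lp0;lp0;lp0;lp0;lp0;lp0;lp0];
 [::lp0;lp0;lp0;lp0;lp0;lp0;lp0;lp0;lp0;lp0;lp0;lp0;lp0;lp0;lp0;lp0;lp0;(Z0,[::(Zpos 1)]);lp0;lp0;lp0;lp0;lp0;lp0;lp0;lp0;lp0;lp0;lp0;lp0];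
 [::lp0;lp0;lp0;lp0;lp0;lp0;lp0;lp0;lp0;lp0;lp0;lp0;lp0;lp0;lp0;lp0;lp0;lp0;(Z0,[::(Zpos 1)]);lp0;lp0;lp0;lp0;lp0;lp0;lp0;lp0;lp0;lp0;lp0];
 [::lp0;lp0;lp0;lp0;lp0;lp0;lp0;lp0;lp0;lp0;lp0;lp0;lp0;lp0;lp0;lp0;lp0;lp0;lp0;(Z0,[::(Zpos 1)]);lp0;lp0;lp0;lp0;lp0;lp0;lp0;lp0;lp0;lp0];
 [::lp0;lp0;lp0;lp0;lp0;lp0;lp0;lp0;lp0;lp0;lp0;lp0;lp0;lp0;lp0;lp0;lp0;lp0;lp0;lp0;(Z0,[::(Zpos 1)]);lp0;lp0;lp0;lp0;lp0;lp0;lp0;lp0;lp0];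
 [::lp0;lp0;lp0;lp0;lp0;lp0;lp0;lp0;lp0;lp0;lp0;lp0;lp0;lp0;lp0;lp0;lp0;lp0;lp0;lp0;lp0;(Z0,[::(Zpos 1)]);lp0;lp0;lp0;lp0;lp0;lp0;lp0;lp0];
 [::lp0;lp0;lp0;lp0;lp0;lp0;lp0;lp0;lp0;lp0;lp0;lp0;lp0;lp0;lp0;lp0;lp0;lp0;lp0;lp0;lp0;lp0;(Z0,[::(Zpos 1)]);lp0;lp0;lp0;lp0;lp0;lp0;lp0];
 [::lp0;lp0;lp0;lp0;lp0;lp0;lp0;lp0;lp0;lp0;lp0;lp0;lp0;lp0;lp0;lp0;lp0;lp0;lp0;lp0;lp0;lp0;lp0;(Z0,[::(Zpos 1)]);lp0;lp0;lp0;lp0;lp0;lp0];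
 [::lp0;lp0;lp0;lp0;lp0;lp0;lp0;lp0;lp0;lp0;lp0;lp0;lp0;lp0;lp0;lp0;lp0;lp0;lp0;lp0;lp0;lp0;lp0;lp0;(Z0,[::(Zpos 1)]);lp0;lp0;lp0;lp0;lp0];
 [::lp0;lp0;lp0;lp0;lp0;lp0;lp0;lp0;lp0;lp0;lp0;lp0;lp0;lp0;lp0;lp0;lp0;lp0;lp0;lp0;lp0;lp0;lp0;lp0;lp0;(Z0,[::(Zpos 1)]);lp0;lp0;lp0;lp0];
 [::lp0;lp0;lp0;lp0;lp0;lp0;lp0;lp0;lp0;lp0;lp0;lp0;lp0;lp0;lp0;lp0;lp0;lp0;lp0;lp0;lp0;lp0;lp0;lp0;lp0;lp0;(Z0,[::(Zpos 1)]);lp0;lp0;lp0];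
 [::lp0;lp0;lp0;lp0;lp0;lp0;lp0;lp0;lp0;lp0;lp0;lp0;lp0;lp0;lp0;lp0;lp0;lp0;lp0;lp0;lp0;lp0;lp0;lp0;lp0;lp0;lp0;(Z0,[::(Zpos 1)]);lp0;lp0];
 [::lp0;lp0;lp0;lp0;lp0;lp0;lp0;lp0;lp0;lp0;lp0;lp0;lp0;lp0;lp0;lp0;lp0;lp0;lp0;lp0;lp0;lp0;lp0;lp0;lp0;lp0;lp0;lp0;(Z0,[::(Zpos 1)]);lp0];
 [::lp0;lp0;lp0;lp0;lp0;lp0;lp0;lp0;lp0;lp0;lp0;lp0;lp0;lp0;lp0;lp0;lp0;lp0;lp0;lp0;lp0;lp0;lp0;lp0;lp0;lp0;lp0;lp0;lp0;(Z0,[::(Zpos 1)])]].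
Definition tAM : seq (seq lp) :=
 [::[::((Zneg 1),[::(Zneg 1)]);((Zneg 1),[::(Zneg 1)]);lp0;lp0;lp0;lp0;lp0;lp0;lp0;((Zneg 2),[::(Zpos 1)]);lp0;((Zneg 2),[::(Zpos 1)]);lp0;lp0;lp0;lp0;lp0;lp0;lp0;lp0;lp0;lp0;lp0;lp0;lp0;lp0;lp0;lp0;lp0;lp0];
 [::((Zneg 1),[::(Zneg 1)]);lp0;lp0;lp0;lp0;lp0;lp0;lp0;lp0;((Zneg 2),[::(Zpos 1)]);lp0;lp0;lp0;lp0;lp0;lp0;lp0;lp0;lp0;lp0;lp0;lp0;lp0;lp0;lp0;lp0;lp0;lp0;lp0;lp0];
 [::lp0;lp0;((Zneg 1),[::(Zneg 1)]);lp0;lp0;lp0;lp0;lp0;lp0;lp0;((Zneg 2),[::(Zpos 1)]);lp0;lp0;lp0;lp0;lp0;lp0;lp0;lp0;lp0;lp0;lp0;lp0;lp0;lp0;lp0;lp0;lp0;lp0;lp0];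
 [::lp0;lp0;lp0;((Zneg 1),[::(Zpos 1);(Zneg 1)]);lp0;lp0;lp0;lp0;lp0;lp0;lp0;lp0;(Z0,[::(Zpos 1)]);lp0;lp0;lp0;lp0;lp0;lp0;lp0;lp0;lp0;lp0;lp0;lp0;lp0;lp0;lp0;lp0;lp0];
 [::lp0;lp0;lp0;lp0;(Z0,[::(Zneg 1)]);((Zneg 1),[::(Zpos 1)]);lp0;lp0;lp0;lp0;lp0;lp0;lp0;(Z0,[::(Zpos 1)]);lp0;lp0;lp0;lp0;lp0;lp0;lp0;lp0;lp0;lp0;lp0;lp0;lp0;lp0;lp0;lp0];
 [::lp0;lp0;lp0;lp0;((Zneg 1),[::(Zpos 1)]);(Z0,[::(Zneg 1)]);lp0;lp0;lp0;lp0;lp0;lp0;lp0;lp0;(Z0,[::(Zpos 1)]);lp0;lp0;lp0;lp0;lp0;lp0;lp0;lp0;lp0;lp0;lp0;lp0;lp0;lp0;lp0];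
 [::lp0;lp0;lp0;lp0;lp0;lp0;((Zneg 1),[::(Zneg 1)]);lp0;((Zneg 1),[::(Zneg 1)]);lp0;lp0;lp0;((Zneg 2),[::(Zneg 1);(Zpos 1)]);((Zneg 2),[::(Zneg 1);(Zpos 1)]);lp0;((Zneg 2),[::(Zpos 1)]);((Zneg 2),[::(Zpos 1)]);lp0;lp0;lp0;lp0;lp0;lp0;lp0;lp0;lp0;lp0;lp0;lp0;lp0];
 [::lp0;lp0;lp0;lp0;lp0;lp0;lp0;((Zneg 1),[::(Zneg 1)]);lp0;lp0;lp0;lp0;lp0;lp0;((Zneg 2),[::(Zneg 1);(Zpos 1)]);lp0;lp0;((Zneg 2),[::(Zpos 1)]);lp0;lp0;lp0;lp0;lp0;lp0;lp0;lp0;lp0;lp0;lp0;lp0];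
 [::lp0;lp0;lp0;lp0;lp0;lp0;((Zneg 1),[::(Zneg 1)]);lp0;lp0;lp0;lp0;lp0;((Zneg 2),[::(Zneg 1)]);((Zneg 1),[::(Zpos 1)]);lp0;((Zneg 2),[::(Zpos 1)]);lp0;lp0;lp0;lp0;lp0;lp0;lp0;lp0;lp0;lp0;lp0;lp0;lp0;lp0];
 [::lp0;lp0;lp0;lp0;lp0;lp0;lp0;lp0;lp0;((Zneg 2),[::(Zneg 1)]);lp0;((Zneg 1),[::(Zpos 1)]);((Zneg 1),[::(Zneg 1)]);lp0;lp0;lp0;((Zneg 2),[::(Zneg 1);(Zpos 1)]);lp0;lp0;((Zneg 2),[::(Zpos 1)]);((Zneg 1),[::(Zneg 1)]);lp0;lp0;lp0;((Zneg 2),[::(Zpos 1)]);lp0;lp0;lp0;lp0;lp0];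
 [::lp0;lp0;lp0;lp0;lp0;lp0;lp0;lp0;lp0;lp0;((Zneg 2),[::(Zneg 1);(Zpos 1)]);lp0;lp0;lp0;((Zneg 1),[::(Zneg 1)]);((Zneg 1),[::(Zpos 1)]);lp0;((Zneg 2),[::(Zneg 1)]);lp0;((Zneg 1),[::(Zneg 1)]);((Zneg 2),[::(Zpos 1)]);lp0;lp0;lp0;lp0;((Zneg 2),[::(Zpos 1)]);lp0;lp0;lp0;lp0];
 [::lp0;lp0;lp0;lp0;lp0;lp0;lp0;lp0;lp0;((Zneg 1),[::(Zpos 1)]);lp0;((Zneg 2),[::(Zneg 1)]);lp0;((Zneg 1),[::(Zneg 1)]);lp0;((Zneg 2),[::(Zneg 1)]);lp0;((Zneg 1),[::(Zpos 1)]);((Zneg 2),[::(Zpos 1);(Zneg 1)]);lp0;lp0;lp0;lp0;lp0;lp0;lp0;((Zneg 2),[::(Zpos 1)]);lp0;lp0;lp0];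
 [::lp0;lp0;lp0;((Zneg 1),[::(Zneg 1)]);lp0;lp0;lp0;lp0;lp0;lp0;lp0;lp0;lp0;lp0;lp0;lp0;lp0;lp0;((Zneg 1),[::(Zpos 1);(Zneg 1)]);lp0;lp0;lp0;lp0;(Z0,[::(Zpos 1)]);lp0;lp0;lp0;lp0;lp0;lp0];
 [::lp0;lp0;lp0;lp0;lp0;((Zneg 1),[::(Zneg 1)]);lp0;lp0;lp0;lp0;lp0;lp0;lp0;lp0;lp0;lp0;lp0;lp0;lp0;(Z0,[::(Zneg 1)]);((Zneg 1),[::(Zpos 1)]);(Z0,[::(Zpos 1)]);lp0;lp0;lp0;lp0;lp0;lp0;lp0;lp0];
 [::lp0;lp0;lp0;lp0;((Zneg 1),[::(Zneg 1)]);lp0;lp0;lp0;lp0;lp0;lp0;lp0;lp0;lp0;lp0;lp0;lp0;lp0;lp0;((Zneg 1),[::(Zpos 1)]);(Z0,[::(Zneg 1)]);lp0;(Z0,[::(Zpos 1)]);lp0;lp0;lp0;lp0;lp0;lp0;lp0];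
 [::lp0;lp0;lp0;lp0;lp0;lp0;lp0;lp0;lp0;((Zneg 2),[::(Zneg 1)]);((Zneg 2),[::(Zneg 1);(Zpos 1)]);((Zneg 1),[::(Zpos 1)]);lp0;lp0;lp0;lp0;lp0;lp0;lp0;((Zneg 1),[::(Zneg 1)]);((Zneg 1),[::(Zneg 1)]);lp0;lp0;lp0;((Zneg 2),[::(Zpos 1)]);((Zneg 2),[::(Zpos 1)]);lp0;lp0;lp0;lp0];
 [::lp0;lp0;lp0;lp0;lp0;lp0;lp0;lp0;lp0;lp0;((Zneg 2),[::(Zneg 1);(Zpos 1)]);lp0;lp0;lp0;lp0;lp0;lp0;lp0;lp0;((Zneg 1),[::(Zneg 1)]);lp0;lp0;lp0;lp0;lp0;((Zneg 2),[::(Zpos 1)]);lp0;lp0;lp0;lp0];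
 [::lp0;lp0;lp0;lp0;lp0;lp0;lp0;lp0;lp0;((Zneg 1),[::(Zpos 1)]);lp0;((Zneg 2),[::(Zneg 1)]);lp0;lp0;lp0;lp0;lp0;lp0;((Zneg 1),[::(Zneg 1)]);lp0;lp0;lp0;lp0;lp0;lp0;lp0;((Zneg 2),[::(Zpos 1)]);lp0;lp0;lp0];
 [::lp0;lp0;lp0;lp0;lp0;lp0;lp0;lp0;lp0;lp0;lp0;((Zneg 1),[::(Zneg 1)]);lp0;lp0;lp0;lp0;lp0;lp0;lp0;lp0;lp0;(Z0,[::(Zneg 1)]);lp0;((Zneg 1),[::(Zpos 1)]);lp0;lp0;lp0;lp0;lp0;(Z0,[::(Zpos 1)])];
 [::lp0;lp0;lp0;lp0;lp0;lp0;lp0;lp0;lp0;lp0;((Zneg 1),[::(Zneg 1)]);lp0;lp0;lp0;lp0;lp0;lp0;lp0;lp0;lp0;lp0;lp0;((Zneg 1),[::(Zpos 1);(Zneg 1)]);lp0;lp0;lp0;lp0;(Z0,[::(Zpos 1)]);lp0;lp0];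
 [::lp0;lp0;lp0;lp0;lp0;lp0;lp0;lp0;lp0;((Zneg 1),[::(Zneg 1)]);lp0;lp0;lp0;lp0;lp0;lp0;lp0;lp0;lp0;lp0;lp0;((Zneg 1),[::(Zpos 1)]);lp0;(Z0,[::(Zneg 1)]);lp0;lp0;lp0;lp0;(Z0,[::(Zpos 1)]);lp0];
 [::lp0;lp0;lp0;lp0;lp0;lp0;lp0;(Z0,[::(Zpos 1)]);lp0;lp0;lp0;lp0;lp0;lp0;lp0;((Zneg 1),[::(Zpos 1);(Zneg 1)]);lp0;lp0;lp0;lp0;lp0;lp0;lp0;lp0;lp0;lp0;lp0;((Zneg 1),[::(Zneg 1)]);lp0;lp0];
 [::lp0;lp0;lp0;lp0;lp0;lp0;lp0;lp0;(Z0,[::(Zpos 1)]);lp0;lp0;lp0;lp0;lp0;lp0;lp0;(Z0,[::(Zneg 1)]);((Zneg 1),[::(Zpos 1)]);lp0;lp0;lp0;lp0;lp0;lp0;lp0;lp0;lp0;lp0;lp0;((Zneg 1),[::(Zneg 1)])];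
 [::lp0;lp0;lp0;lp0;lp0;lp0;(Z0,[::(Zpos 1)]);lp0;lp0;lp0;lp0;lp0;lp0;lp0;lp0;lp0;((Zneg 1),[::(Zpos 1)]);(Z0,[::(Zneg 1)]);lp0;lp0;lp0;lp0;lp0;lp0;lp0;lp0;lp0;lp0;((Zneg 1),[::(Zneg 1)]);lp0];
 [::(Z0,[::(Zpos 1)]);lp0;lp0;lp0;lp0;lp0;lp0;lp0;lp0;lp0;lp0;lp0;lp0;lp0;lp0;(Z0,[::(Zneg 1)]);((Zneg 1),[::(Zpos 1)]);lp0;lp0;lp0;lp0;lp0;((Zneg 1),[::(Zneg 1)]);lp0;lp0;lp0;lp0;lp0;lp0;lp0];
 [::lp0;(Z0,[::(Zpos 1)]);lp0;lp0;lp0;lp0;lp0;lp0;lp0;lp0;lp0;lp0;lp0;lp0;lp0;((Zneg 1),[::(Zpos 1)]);(Z0,[::(Zneg 1)]);lp0;lp0;lp0;lp0;((Zneg 1),[::(Zneg 1)]);lp0;lp0;lp0;lp0;lp0;lp0;lp0;lp0];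
 [::lp0;lp0;(Z0,[::(Zpos 1)]);lp0;lp0;lp0;lp0;lp0;lp0;lp0;lp0;lp0;lp0;lp0;lp0;lp0;lp0;((Zneg 1),[::(Zpos 1);(Zneg 1)]);lp0;lp0;lp0;lp0;lp0;((Zneg 1),[::(Zneg 1)]);lp0;lp0;lp0;lp0;lp0;lp0];
 [::lp0;lp0;lp0;lp0;lp0;lp0;lp0;lp0;lp0;lp0;lp0;lp0;lp0;lp0;lp0;lp0;((Zneg 1),[::(Zneg 1)]);lp0;lp0;lp0;lp0;lp0;lp0;lp0;lp0;((Zneg 2),[::(Zneg 1)]);((Zneg 1),[::(Zpos 1)]);lp0;lp0;lp0];
 [::lp0;lp0;lp0;lp0;lp0;lp0;lp0;lp0;lp0;lp0;lp0;lp0;lp0;lp0;lp0;((Zneg 1),[::(Zneg 1)]);lp0;lp0;lp0;lp0;lp0;lp0;lp0;lp0;lp0;((Zneg 1),[::(Zpos 1)]);((Zneg 2),[::(Zneg 1)]);lp0;lp0;lp0];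
 [::lp0;lp0;lp0;lp0;lp0;lp0;lp0;lp0;lp0;lp0;lp0;lp0;lp0;lp0;lp0;lp0;lp0;((Zneg 1),[::(Zneg 1)]);lp0;lp0;lp0;lp0;lp0;lp0;((Zneg 2),[::(Zneg 1);(Zpos 1)]);lp0;lp0;lp0;lp0;lp0]].
Definition tU : seq (seq lp) :=
 [::[::(Z0,[::(Zpos 1)]);(Z0,[::(Zneg 1)]);lp0;lp0;lp0;lp0;lp0;lp0;lp0;((Zneg 7),[::(Zneg 1);(Zpos 1);(Zpos 1);(Zneg 1)]);lp0;((Zneg 10),[::(Zneg 1);(Zpos 2);Z0;(Zneg 2);(Zpos 1)]);((Zneg 12),[::(Zneg 1);(Zpos 2);Z0;(Zneg 2);(Zpos 1)]);((Zneg 11),[::(Zneg 1);(Zpos 1);(Zpos 1);(Zneg 1)]);((Zneg 10),[::(Zpos 1);(Zneg 1)]);((Zneg 12),[::(Zneg 1);(Zpos 1)]);((Zneg 14),[::(Zpos 2);(Zneg 4);(Zpos 2)]);((Zneg 16),[::(Zneg 1);(Zpos 2);Z0;(Zneg 2);(Zpos 1)]);((Zneg 17),[::(Zneg 1);(Zpos 2);Z0;(Zneg 2);(Zpos 1)]);lp0;((Zneg 18),[::(Zneg 1);(Zpos 1);(Zpos 1);(Zneg 1)]);((Zneg 19),[::(Zpos 1);(Zneg 1);(Zneg 1);(Zpos 1)]);((Zneg 22),[::(Zpos 1);(Zneg 3);(Zpos 1);(Zpos 3);(Zneg 2)]);((Zneg 24),[::(Zneg 1);(Zpos 3);(Zneg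 1);(Zneg 3);(Zpos 2)]);((Zneg 28),[::(Zpos 1);(Zneg 2);(Zneg 5);(Zpos 10);(Zpos 4);(Zneg 12);(Zpos 2);(Zpos 3);(Zneg 1)]);((Zneg 29),[::(Zpos 1);(Zpos 1);(Zneg 5);(Zneg 1);(Zpos 8);(Zneg 5);(Zneg 4);(Zpos 6);(Zneg 2)]);((Zneg 30),[::(Zneg 1);(Zpos 1);(Zpos 6);(Zneg 2);(Zneg 8);(Zpos 8);(Zpos 2);(Zneg 4);(Zneg 1);(Zpos 1)]);((Zneg 30),[::(Zpos 3);(Zneg 9);(Zneg 10);(Zpos 18);(Zpos 3);(Zneg 26);(Zpos 15);(Zpos 10);(Zneg 8);(Zneg 1);(Zpos 1)]);((Zneg 31),[::(Zneg 3);(Zneg 6);(Zpos 16);(Zpos 2);(Zneg 20);(Zneg 6);(Zpos 26);(Zpos 8);(Zneg 25);(Zpos 4);(Zpos 6);(Zneg 2)]);((Zneg 32),[::(Zneg 9);(Zpos 24);(Zpos 3);(Zneg 53);(Zpos 12);(Zpos 69);(Zneg 10);(Zneg 81);(Zpos 53);(Zpos 9);(Zneg 17);(Zpos 4)])];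
 [::lp0;(Z0,[::(Zpos 1)]);lp0;lp0;lp0;lp0;lp0;lp0;lp0;lp0;lp0;((Zneg 11),[::(Zneg 1);(Zpos 2);Z0;(Zneg 2);(Zpos 1)]);((Zneg 11),[::(Zneg 1);(Zpos 2);Z0;(Zneg 2);(Zpos 1)]);((Zneg 12),[::(Zneg 1);(Zpos 1);(Zpos 1);(Zneg 1)]);((Zneg 11),[::(Zpos 1);(Zneg 1)]);((Zneg 13),[::(Zneg 1);(Zpos 1)]);((Zneg 15),[::(Zpos 1);(Zneg 2);(Zpos 2);(Zneg 2);(Zpos 1)]);((Zneg 17),[::(Zneg 1);(Zpos 2);Z0;(Zneg 2);(Zpos 1)]);((Zneg 18),[::(Zneg 1);(Zpos 2);Z0;(Zneg 2);(Zpos 1)]);lp0;lp0;((Zneg 18),[::(Zneg 1);(Zpos 1);(Zpos 1);(Zneg 1)]);((Zneg 21),[::(Zneg 1);(Zpos 3);(Zneg 1);(Zneg 3);(Zpos 2)]);((Zneg 25),[::(Zneg 1);(Zpos 2);(Zpos 4);(Zneg 9);(Zneg 2);(Zpos 9);(Zneg 1);(Zneg 2)]);((Zneg 27),[::(Zpos 1);(Zneg 2);(Zneg 3);(Zpos 6);(Zpos 1);(Zneg 4);Z0;(Zpos 1)]);((Zneg 28),[::(Zpos 1);(Zpos 1);(Zneg 4);Z0;(Zpos 7);(Zneg 4);(Zneg 2);(Zpos 2)]);((Zneg 30),[::(Zneg 1);(Zneg 1);(Zpos 5);(Zneg 1);(Zneg 14);(Zpos 11);(Zpos 4);(Zneg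 9);(Zpos 3);(Zpos 2);(Zneg 1)]);((Zneg 30),[::(Zpos 3);(Zneg 3);(Zneg 1);(Zpos 10);(Zpos 6);(Zneg 21);(Zpos 10);(Zpos 9);(Zneg 13);(Zpos 2);(Zpos 3);(Zneg 1)]);((Zneg 31),[::(Zpos 3);(Zneg 12);(Zpos 14);(Zpos 4);(Zneg 14);(Zpos 12);(Zneg 6);(Zneg 4);(Zpos 3)]);((Zneg 29),[::(Zpos 3);(Zpos 9);(Zneg 34);(Zpos 21);(Zneg 4);(Zpos 1);(Zpos 2);(Zneg 3);(Zpos 1)])];
 [::lp0;lp0;(Z0,[::(Zpos 1)]);lp0;lp0;lp0;lp0;lp0;lp0;lp0;((Zneg 9),[::(Zpos 1);(Zneg 1);(Zneg 1);(Zpos 1)]);lp0;lp0;lp0;((Zneg 12),[::(Zneg 1);Z0;(Zpos 1)]);((Zneg 12),[::(Zpos 1);Z0;(Zneg 1)]);((Zneg 14),[::(Zneg 1);(Zpos 1);(Zpos 1);(Zneg 1)]);lp0;lp0;((Zneg 18),[::(Zneg 1);(Zpos 1);(Zpos 1);(Zneg 1)]);lp0;lp0;((Zneg 20),[::(Zpos 1);(Zneg 2);Z0;(Zpos 2);(Zneg 1)]);((Zneg 24),[::(Zpos 1);(Zneg 1);(Zneg 4);(Zpos 5);(Zpos 3);(Zneg 5);Z0;(Zpos 1)]);((Zneg 24),[::(Zneg 3);(Zpos 4);(Zpos 1);(Zneg 2)]);((Zneg 29),[::(Zpos 1);(Zneg 1);(Zneg 5);(Zpos 12);(Zneg 3);(Zneg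 10);(Zpos 8);(Zneg 2)]);((Zneg 30),[::(Zneg 1);(Zpos 3);(Zneg 1);(Zneg 7);(Zpos 10);(Zneg 7);Z0;(Zpos 7);(Zneg 3);(Zneg 2);(Zpos 1)]);((Zneg 30),[::(Zpos 3);(Zneg 3);(Zneg 7);(Zpos 19);(Zneg 13);(Zneg 3);(Zpos 5);(Zneg 1)]);((Zneg 29),[::(Zneg 18);(Zpos 42);(Zneg 12);(Zneg 44);(Zpos 42);(Zneg 2);(Zneg 12);(Zpos 4)]);((Zneg 31),[::(Zneg 9);(Zpos 33);(Zneg 27);(Zneg 35);(Zpos 79);(Zneg 67);(Zpos 31);(Zpos 1);(Zneg 12);(Zpos 8);(Zneg 2)])];
 [::lp0;lp0;lp0;(Z0,[::(Zpos 1)]);lp0;lp0;lp0;lp0;lp0;lp0;lp0;lp0;((Zneg 11),[::(Zneg 1);(Zpos 1);(Zpos 2);(Zneg 2);(Zneg 1);(Zpos 1)]);lp0;lp0;lp0;lp0;lp0;((Zneg 18),[::(Zpos 1);(Zneg 3);(Zpos 1);(Zpos 5);(Zneg 5);(Zneg 1);(Zpos 3);(Zneg 1)]);lp0;((Zneg 17),[::(Zneg 1);(Zpos 2);Z0;(Zneg 2);(Zpos 1)]);((Zneg 18),[::(Zpos 2);(Zneg 4);Z0;(Zpos 4);(Zneg 2)]);((Zneg 21),[::(Zpos 2);(Zneg 8);(Zpos 8);(Zpos 4);(Zneg 10);(Zpos 4)]);((Zneg 25),[::(Zpos 1);(Zneg 3);(Zneg 4);(Zpos 19);(Zneg 9);(Zneg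 17);(Zpos 14);(Zpos 1);(Zneg 2)]);((Zneg 24),[::(Zpos 2);(Zneg 7);(Zpos 1);(Zpos 9);(Zneg 4);(Zneg 2);(Zpos 1)]);((Zneg 26),[::(Zpos 1);(Zpos 2);(Zneg 5);(Zneg 1);(Zpos 7);(Zneg 2);(Zneg 4);(Zpos 2)]);((Zneg 27),[::(Zneg 2);(Zpos 1);(Zpos 8);(Zneg 6);(Zneg 7);(Zpos 6);(Zpos 1);(Zneg 1)]);((Zneg 25),[::(Zneg 6);(Zpos 9);(Zpos 5);(Zneg 12);(Zpos 2);(Zpos 3);(Zneg 1)]);((Zneg 30),[::(Zneg 3);(Zpos 9);(Zneg 11);(Zneg 15);(Zpos 37);(Zpos 1);(Zneg 29);(Zpos 7);(Zpos 6);(Zneg 2)]);((Zneg 31),[::(Zneg 3);(Zpos 12);(Zneg 23);(Zpos 20);(Zpos 17);(Zneg 47);(Zpos 18);(Zpos 16);(Zneg 10);(Zneg 1);(Zpos 1)])];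
 [::lp0;lp0;lp0;lp0;((Zneg 1),[::(Zpos 1);(Zneg 1)]);((Zneg 2),[::(Zneg 1);(Zpos 1)]);lp0;lp0;lp0;lp0;lp0;lp0;lp0;((Zneg 10),[::(Zneg 1);(Zpos 1);(Zpos 1);(Zneg 1)]);((Zneg 11),[::(Zneg 1);(Zpos 1);(Zpos 1);(Zneg 1)]);lp0;lp0;lp0;lp0;((Zneg 18),[::(Zpos 1);(Zneg 2);Z0;(Zpos 2);(Zneg 1)]);((Zneg 17),[::(Zneg 1);(Zpos 1);(Zpos 1);(Zneg 1)]);((Zneg 18),[::(Zpos 1);(Zneg 1);Z0;Z0;(Zneg 1);(Zpos 1)]);((Zneg 21),[::(Zpos 1);(Zneg 4);(Zpos 5);(Zneg 1);(Zneg 4);(Zpos 5);(Zneg 2)]);((Zneg 24),[::(Zneg 1);(Zpos 2);(Zpos 5);(Zneg 14);(Zpos 4);(Zpos 13);(Zneg 10);(Zneg 1);(Zpos 2)]);((Zneg 25),[::(Zpos 1);Z0;(Zneg 7);(Zpos 3);(Zpos 6);(Zneg 2);(Zneg 1)]);((Zneg 26),[::(Zpos 1);(Zpos 2);(Zneg 2);Z0;(Zpos 2);(Zneg 2)]);((Zneg 27),[::(Zneg 2);(Zneg 1);(Zpos 7);(Zpos 1);(Zneg 12);(Zpos 3);(Zpos 9);(Zneg 4);(Zneg 2);(Zpos 1)]);((Zneg 28),[::(Zpos 6);(Zneg 3);(Zneg 14);(Zpos 13);(Zpos 7);(Zneg 13);(Zpos 2);(Zpos 3);(Zneg 1)]);((Zneg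 30),[::(Zpos 3);(Zneg 6);(Zneg 7);(Zpos 14);(Zpos 5);(Zneg 10);(Zneg 1);(Zpos 2)]);((Zneg 31),[::(Zpos 6);(Zneg 30);(Zpos 40);(Zpos 25);(Zneg 89);(Zpos 31);(Zpos 46);(Zneg 33);(Zneg 1);(Zpos 7);(Zneg 2)])];
 [::lp0;lp0;lp0;lp0;lp0;((Zneg 1),[::(Zneg 1);(Zpos 1)]);lp0;lp0;lp0;lp0;lp0;lp0;lp0;((Zneg 11),[::(Zneg 1);(Zpos 1);(Zpos 1);(Zneg 1)]);lp0;lp0;lp0;lp0;lp0;((Zneg 17),[::(Zneg 1);(Zpos 2);Z0;(Zneg 2);(Zpos 1)]);((Zneg 18),[::(Zpos 1);(Zneg 1);(Zneg 1);(Zpos 1)]);((Zneg 19),[::(Zneg 1);(Zpos 1);(Zpos 1);(Zneg 1)]);((Zneg 22),[::(Zneg 1);(Zpos 3);(Zneg 1);(Zneg 2);(Zneg 1);(Zpos 2);(Zpos 2);(Zneg 3);(Zpos 1)]);((Zneg 22),[::(Zpos 1);(Zneg 4);(Zpos 6);Z0;(Zneg 8);(Zpos 5);(Zpos 1);(Zneg 1)]);((Zneg 25),[::(Zpos 1);(Zneg 3);Z0;(Zpos 3);(Zneg 1);(Zneg 1);(Zpos 1)]);((Zneg 26),[::(Zpos 2);Z0;(Zneg 8);(Zpos 9);(Zpos 2);(Zneg 6);(Zpos 2)]);((Zneg 27),[::(Zneg 2);(Zpos 3);(Zpos 5);(Zneg 5);(Zneg 5);(Zpos 3);(Zpos 2);(Zneg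 1)]);((Zneg 26),[::(Zneg 6);(Zpos 3);(Zpos 8);(Zneg 4);(Zneg 2);(Zpos 1)]);((Zneg 29),[::(Zneg 3);(Zpos 6);(Zneg 5);(Zneg 8);(Zpos 23);(Zneg 4);(Zneg 19);(Zpos 8);(Zpos 4);(Zneg 2)]);((Zneg 31),[::(Zneg 3);(Zpos 12);(Zneg 14);(Zneg 13);(Zpos 56);(Zneg 36);(Zneg 38);(Zpos 49);(Zneg 5);(Zneg 12);(Zpos 4)])];
 [::lp0;lp0;lp0;lp0;lp0;lp0;((Zneg 3),[::(Zneg 1);(Zpos 1);(Zpos 1);(Zneg 1)]);lp0;((Zneg 5),[::(Zpos 1);(Zneg 1);(Zneg 1);(Zpos 1)]);lp0;lp0;lp0;((Zneg 13),[::(Zneg 1);(Zpos 2);(Zpos 1);(Zneg 4);(Zpos 1);(Zpos 2);(Zneg 1)]);((Zneg 12),[::(Zpos 1);(Zneg 1);(Zneg 2);(Zpos 2);(Zpos 1);(Zneg 1)]);((Zneg 11),[::(Zneg 1);(Zpos 1);(Zpos 1);(Zneg 1)]);((Zneg 13),[::(Zpos 1);(Zneg 1);(Zneg 1);(Zpos 1)]);((Zneg 15),[::(Zneg 1);(Zpos 2);Z0;(Zneg 2);(Zpos 1)]);((Zneg 17),[::(Zpos 1);(Zneg 2);Z0;(Zpos 2);(Zneg 1)]);((Zneg 20),[::(Zpos 1);(Zneg 3);(Zpos 2);(Zpos 4);(Zneg 8);(Zpos 3);(Zpos 4);(Zneg 4);(Zpos 1)]);((Zneg 18),[::(Zpos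 1);(Zneg 2);Z0;(Zpos 2);(Zneg 1)]);((Zneg 19),[::(Zneg 1);(Zpos 3);(Zneg 3);(Zneg 1);(Zpos 4);(Zneg 2)]);((Zneg 20),[::(Zpos 2);(Zneg 5);(Zpos 4);(Zpos 2);(Zneg 5);(Zpos 2);(Zneg 1);(Zpos 1)]);((Zneg 23),[::(Zpos 2);(Zneg 9);(Zpos 14);(Zneg 7);(Zneg 6);(Zpos 11);(Zneg 8);(Zpos 5);(Zneg 2)]);((Zneg 27),[::(Zpos 1);(Zneg 3);(Zneg 3);(Zpos 18);(Zneg 17);(Zneg 1);(Zpos 8);(Zneg 8);(Zpos 12);(Zneg 8);(Zneg 1);(Zpos 2)]);((Zneg 26),[::(Zneg 1);(Zneg 1);(Zpos 8);(Zneg 3);(Zneg 10);(Zpos 8);(Zpos 1);(Zneg 2)]);((Zneg 28),[::(Zpos 1);(Zneg 1);(Zneg 7);(Zpos 8);(Zpos 2);(Zneg 7);Z0;(Zpos 4);(Zneg 2)]);((Zneg 29),[::(Zneg 1);(Zpos 5);(Zpos 2);(Zneg 15);(Zpos 9);(Zpos 17);(Zneg 21);Z0;(Zpos 11);(Zneg 4);(Zneg 2);(Zpos 1)]);((Zneg 29),[::(Zneg 3);Z0;(Zpos 1);(Zneg 3);Z0;(Zneg 5);(Zpos 9);(Zneg 1);(Zneg 3);(Zpos 1)]);((Zneg 32),[::(Zneg 3);(Zpos 9);(Zneg 14);(Zneg 9);(Zpos 50);(Zneg 43);(Zneg 24);(Zpos 57);(Zneg 15);(Zneg 14);(Zpos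 6)]);((Zneg 33),[::(Zneg 3);(Zpos 12);(Zneg 26);(Zpos 38);(Zneg 21);(Zneg 38);(Zpos 79);(Zneg 49);(Zpos 10);(Zpos 4);(Zneg 5);(Zpos 5);(Zneg 2)])];
 [::lp0;lp0;lp0;lp0;lp0;lp0;lp0;((Zneg 4),[::(Zpos 1);(Zneg 1);(Zneg 1);(Zpos 1)]);lp0;lp0;lp0;lp0;lp0;lp0;((Zneg 13),[::(Zneg 1);(Zpos 2);Z0;(Zneg 2);(Zpos 1)]);lp0;lp0;((Zneg 16),[::(Zpos 1);(Zneg 2);Z0;(Zpos 2);(Zneg 1)]);((Zneg 18),[::(Zpos 1);(Zneg 2);Z0;(Zpos 2);(Zneg 1)]);((Zneg 20),[::(Zpos 1);(Zneg 2);(Zpos 1);(Zneg 1);(Zpos 1);(Zpos 2);(Zneg 3);(Zpos 1)]);((Zneg 19),[::(Zneg 1);(Zpos 2);Z0;(Zneg 2);(Zpos 1)]);((Zneg 20),[::(Zpos 1);(Zneg 2);(Zpos 1);(Zpos 1);(Zneg 2);(Zpos 1)]);((Zneg 23),[::(Zpos 1);(Zneg 5);(Zpos 8);(Zneg 3);(Zneg 3);(Zpos 2);(Zneg 2);(Zpos 5);(Zneg 4);(Zpos 1)]);((Zneg 26),[::(Zneg 1);(Zpos 3);(Zpos 2);(Zneg 14);(Zpos 12);(Zpos 1);(Zneg 4);(Zpos 7);(Zneg 11);(Zpos 4);(Zpos 2);(Zneg 1)]);((Zneg 26),[::(Zpos 2);(Zneg 6);(Zpos 4);(Zpos 1);Z0;Z0;(Zneg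 2);(Zpos 1)]);((Zneg 26),[::(Zpos 1);(Zpos 5);(Zneg 11);(Zpos 1);(Zpos 10);(Zneg 8);(Zpos 2)]);((Zneg 29),[::(Zneg 1);(Zpos 1);Z0;(Zneg 5);(Zpos 7);Z0;(Zneg 1);(Zneg 2);(Zpos 1)]);((Zneg 30),[::(Zpos 6);(Zneg 6);(Zneg 8);(Zpos 17);(Zneg 1);(Zneg 26);(Zpos 22);(Zpos 1);(Zneg 7);(Zpos 2)]);((Zneg 32),[::(Zpos 3);(Zneg 6);(Zneg 7);(Zpos 23);(Zneg 13);(Zneg 1);(Zneg 7);(Zpos 1);(Zpos 28);(Zneg 25);(Zneg 2);(Zpos 8);(Zneg 2)]);((Zneg 33),[::(Zpos 6);(Zneg 30);(Zpos 46);(Zpos 1);(Zneg 55);(Zpos 12);(Zpos 22);(Zpos 57);(Zneg 105);(Zpos 40);(Zpos 22);(Zneg 20);(Zpos 4)])];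
 [::lp0;lp0;lp0;lp0;lp0;lp0;lp0;lp0;((Zneg 5),[::(Zneg 1);(Zpos 1);(Zpos 1);(Zneg 1)]);lp0;lp0;lp0;((Zneg 12),[::(Zpos 1);(Zneg 2);(Zneg 1);(Zpos 4);(Zneg 1);(Zneg 2);(Zpos 1)]);((Zneg 13),[::(Zneg 1);(Zpos 1);(Zpos 2);(Zneg 2);(Zneg 1);(Zpos 1)]);((Zneg 12),[::(Zpos 1);(Zneg 1);(Zneg 1);(Zpos 1)]);lp0;((Zneg 14),[::(Zneg 1);(Zpos 1);(Zpos 1);(Zneg 1)]);lp0;((Zneg 18),[::(Zpos 1);(Zneg 3);(Zpos 1);(Zpos 5);(Zneg 5);(Zneg 1);(Zpos 3);(Zneg 1)]);((Zneg 19),[::(Zneg 1);(Zpos 3);(Zneg 1);(Zneg 3);(Zpos 2)]);((Zneg 20),[::(Zpos 1);(Zneg 1);Z0;(Zneg 1);(Zpos 1);(Zpos 1);(Zneg 2);(Zpos 1)]);((Zneg 21),[::(Zneg 1);(Zpos 1);Z0;(Zpos 2);(Zneg 4);Z0;(Zpos 5);(Zneg 3)]);((Zneg 24),[::(Zneg 1);(Zpos 3);(Zneg 2);(Zpos 3);(Zneg 12);(Zpos 11);(Zpos 8);(Zneg 17);(Zpos 7)]);((Zneg 25),[::(Zpos 1);(Zneg 3);(Zneg 9);(Zpos 34);(Zneg 16);(Zneg 33);(Zpos 29);(Zpos 2);(Zneg 5)]);((Zneg 27),[::(Zpos 1);(Zneg 4);(Zpos 3);(Zpos 8);(Zneg 12);(Zneg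 4);(Zpos 12);(Zneg 3);(Zneg 2);(Zpos 1)]);((Zneg 28),[::(Zpos 1);(Zneg 2);(Zneg 3);(Zpos 13);(Zneg 9);(Zneg 5);(Zpos 11);(Zneg 2);(Zneg 4);(Zpos 2)]);((Zneg 29),[::(Zneg 1);(Zpos 3);(Zneg 1);(Zneg 7);(Zpos 2);(Zpos 9);(Zneg 8);(Zneg 4);(Zpos 5);(Zpos 1);(Zneg 1)]);((Zneg 29),[::(Zneg 3);Z0;(Zpos 19);(Zneg 12);(Zneg 12);(Zpos 19);(Zpos 2);(Zneg 14);(Zpos 3);(Zpos 3);(Zneg 1)]);((Zneg 31),[::(Zneg 3);(Zpos 9);(Zneg 2);(Zneg 9);(Zneg 2);(Zpos 17);(Zpos 4);(Zneg 23);(Zpos 5);(Zpos 6);(Zneg 2)]);((Zneg 33),[::(Zneg 3);(Zpos 12);(Zneg 8);(Zneg 19);(Zpos 15);(Zpos 38);(Zneg 13);(Zneg 80);(Zpos 57);(Zpos 14);(Zneg 21);(Zpos 3);(Zpos 1)])];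
 [::lp0;lp0;lp0;lp0;lp0;lp0;lp0;lp0;lp0;((Zneg 6),[::(Zneg 1);(Zpos 1);(Zpos 1);(Zneg 1)]);lp0;((Zneg 9),[::(Zneg 1);(Zpos 2);Z0;(Zneg 2);(Zpos 1)]);((Zneg 11),[::(Zneg 1);(Zpos 2);Z0;(Zneg 2);(Zpos 1)]);((Zneg 10),[::(Zneg 1);(Zpos 1);(Zpos 1);(Zneg 1)]);((Zneg 9),[::(Zpos 1);(Zneg 1)]);((Zneg 11),[::(Zneg 1);(Zpos 1)]);((Zneg 13),[::(Zpos 2);(Zneg 4);(Zpos 2)]);((Zneg 15),[::(Zneg 1);(Zpos 2);Z0;(Zneg 2);(Zpos 1)]);((Zneg 16),[::(Zneg 1);(Zpos 2);Z0;(Zneg 2);(Zpos 1)]);lp0;((Zneg 17),[::(Zneg 1);(Zpos 1);(Zpos 1);(Zneg 1)]);((Zneg 18),[::(Zpos 1);(Zneg 1);(Zneg 1);(Zpos 1)]);((Zneg 21),[::(Zpos 1);(Zneg 3);(Zpos 1);(Zpos 3);(Zneg 2)]);((Zneg 23),[::(Zneg 1);(Zpos 3);(Zneg 1);(Zneg 3);(Zpos 2)]);((Zneg 27),[::(Zpos 1);(Zneg 2);(Zneg 5);(Zpos 10);(Zpos 4);(Zneg 12);(Zpos 2);(Zpos 3);(Zneg 1)]);((Zneg 28),[::(Zpos 1);(Zpos 1);(Zneg 5);(Zneg 1);(Zpos 8);(Zneg 5);(Zneg 4);(Zpos 6);(Zneg 2)]);((Zneg 29),[::(Zneg 1);(Zpos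 1);(Zpos 6);(Zneg 2);(Zneg 8);(Zpos 8);(Zpos 2);(Zneg 4);(Zneg 1);(Zpos 1)]);((Zneg 29),[::(Zpos 3);(Zneg 9);(Zneg 10);(Zpos 18);(Zpos 3);(Zneg 26);(Zpos 15);(Zpos 10);(Zneg 8);(Zneg 1);(Zpos 1)]);((Zneg 30),[::(Zneg 3);(Zneg 6);(Zpos 16);(Zpos 2);(Zneg 20);(Zneg 6);(Zpos 26);(Zpos 8);(Zneg 25);(Zpos 4);(Zpos 6);(Zneg 2)]);((Zneg 31),[::(Zneg 9);(Zpos 24);(Zpos 3);(Zneg 53);(Zpos 12);(Zpos 69);(Zneg 10);(Zneg 81);(Zpos 53);(Zpos 9);(Zneg 17);(Zpos 4)])];
 [::lp0;lp0;lp0;lp0;lp0;lp0;lp0;lp0;lp0;lp0;((Zneg 8),[::(Zpos 1);(Zneg 1);(Zneg 1);(Zpos 1)]);lp0;lp0;lp0;((Zneg 11),[::(Zneg 1);Z0;(Zpos 1)]);((Zneg 11),[::(Zpos 1);Z0;(Zneg 1)]);((Zneg 13),[::(Zneg 1);(Zpos 1);(Zpos 1);(Zneg 1)]);lp0;lp0;((Zneg 17),[::(Zneg 1);(Zpos 1);(Zpos 1);(Zneg 1)]);lp0;lp0;((Zneg 19),[::(Zpos 1);(Zneg 2);Z0;(Zpos 2);(Zneg 1)]);((Zneg 23),[::(Zpos 1);(Zneg 1);(Zneg 4);(Zpos 5);(Zpos 3);(Zneg 5);Z0;(Zpos 1)]);((Zneg 23),[::(Zneg 3);(Zpos 4);(Zpos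 1);(Zneg 2)]);((Zneg 28),[::(Zpos 1);(Zneg 1);(Zneg 5);(Zpos 12);(Zneg 3);(Zneg 10);(Zpos 8);(Zneg 2)]);((Zneg 29),[::(Zneg 1);(Zpos 3);(Zneg 1);(Zneg 7);(Zpos 10);(Zneg 7);Z0;(Zpos 7);(Zneg 3);(Zneg 2);(Zpos 1)]);((Zneg 29),[::(Zpos 3);(Zneg 3);(Zneg 7);(Zpos 19);(Zneg 13);(Zneg 3);(Zpos 5);(Zneg 1)]);((Zneg 28),[::(Zneg 18);(Zpos 42);(Zneg 12);(Zneg 44);(Zpos 42);(Zneg 2);(Zneg 12);(Zpos 4)]);((Zneg 30),[::(Zneg 9);(Zpos 33);(Zneg 27);(Zneg 35);(Zpos 79);(Zneg 67);(Zpos 31);(Zpos 1);(Zneg 12);(Zpos 8);(Zneg 2)])];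
 [::lp0;lp0;lp0;lp0;lp0;lp0;lp0;lp0;lp0;lp0;lp0;((Zneg 10),[::(Zneg 1);(Zpos 2);Z0;(Zneg 2);(Zpos 1)]);((Zneg 10),[::(Zneg 1);(Zpos 2);Z0;(Zneg 2);(Zpos 1)]);((Zneg 11),[::(Zneg 1);(Zpos 1);(Zpos 1);(Zneg 1)]);((Zneg 10),[::(Zpos 1);(Zneg 1)]);((Zneg 12),[::(Zneg 1);(Zpos 1)]);((Zneg 14),[::(Zpos 1);(Zneg 2);(Zpos 2);(Zneg 2);(Zpos 1)]);((Zneg 16),[::(Zneg 1);(Zpos 2);Z0;(Zneg 2);(Zpos 1)]);((Zneg 17),[::(Zneg 1);(Zpos 2);Z0;(Zneg 2);(Zpos 1)]);lp0;lp0;((Zneg 17),[::(Zneg 1);(Zpos 1);(Zpos 1);(Zneg 1)]);((Zneg 20),[::(Zneg 1);(Zpos 3);(Zneg 1);(Zneg 3);(Zpos 2)]);((Zneg 24),[::(Zneg 1);(Zpos 2);(Zpos 4);(Zneg 9);(Zneg 2);(Zpos 9);(Zneg 1);(Zneg 2)]);((Zneg 26),[::(Zpos 1);(Zneg 2);(Zneg 3);(Zpos 6);(Zpos 1);(Zneg 4);Z0;(Zpos 1)]);((Zneg 27),[::(Zpos 1);(Zpos 1);(Zneg 4);Z0;(Zpos 7);(Zneg 4);(Zneg 2);(Zpos 2)]);((Zneg 29),[::(Zneg 1);(Zneg 1);(Zpos 5);(Zneg 1);(Zneg 14);(Zpos 11);(Zpos 4);(Zneg 9);(Zpos 3);(Zpos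 2);(Zneg 1)]);((Zneg 29),[::(Zpos 3);(Zneg 3);(Zneg 1);(Zpos 10);(Zpos 6);(Zneg 21);(Zpos 10);(Zpos 9);(Zneg 13);(Zpos 2);(Zpos 3);(Zneg 1)]);((Zneg 30),[::(Zpos 3);(Zneg 12);(Zpos 14);(Zpos 4);(Zneg 14);(Zpos 12);(Zneg 6);(Zneg 4);(Zpos 3)]);((Zneg 28),[::(Zpos 3);(Zpos 9);(Zneg 34);(Zpos 21);(Zneg 4);(Zpos 1);(Zpos 2);(Zneg 3);(Zpos 1)])];
 [::lp0;lp0;lp0;lp0;lp0;lp0;lp0;lp0;lp0;lp0;lp0;lp0;((Zneg 12),[::(Zpos 1);(Zneg 2);(Zneg 1);(Zpos 4);(Zneg 1);(Zneg 2);(Zpos 1)]);lp0;lp0;lp0;lp0;lp0;((Zneg 19),[::(Zneg 1);(Zpos 4);(Zneg 4);(Zneg 4);(Zpos 10);(Zneg 4);(Zneg 4);(Zpos 4);(Zneg 1)]);lp0;((Zneg 18),[::(Zpos 1);(Zneg 3);(Zpos 2);(Zpos 2);(Zneg 3);(Zpos 1)]);((Zneg 19),[::(Zneg 2);(Zpos 6);(Zneg 4);(Zneg 4);(Zpos 6);(Zneg 2)]);((Zneg 22),[::(Zneg 2);(Zpos 10);(Zneg 16);(Zpos 4);(Zpos 14);(Zneg 14);(Zpos 4)]);((Zneg 26),[::(Zneg 1);(Zpos 4);(Zpos 1);(Zneg 23);(Zpos 28);(Zpos 8);(Zneg 31);(Zpos 13);(Zpos 3);(Zneg 2)]);((Zneg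 25),[::(Zneg 2);(Zpos 9);(Zneg 8);(Zneg 8);(Zpos 13);(Zneg 2);(Zneg 3);(Zpos 1)]);((Zneg 27),[::(Zneg 1);(Zneg 1);(Zpos 7);(Zneg 4);(Zneg 8);(Zpos 9);(Zpos 2);(Zneg 6);(Zpos 2)]);((Zneg 28),[::(Zpos 2);(Zneg 3);(Zneg 7);(Zpos 14);(Zpos 1);(Zneg 13);(Zpos 5);(Zpos 2);(Zneg 1)]);((Zneg 26),[::(Zpos 6);(Zneg 15);(Zpos 4);(Zpos 17);(Zneg 14);(Zneg 1);(Zpos 4);(Zneg 1)]);((Zneg 31),[::(Zpos 3);(Zneg 12);(Zpos 20);(Zpos 4);(Zneg 52);(Zpos 36);(Zpos 30);(Zneg 36);(Zpos 1);(Zpos 8);(Zneg 2)]);((Zneg 32),[::(Zpos 3);(Zneg 15);(Zpos 35);(Zneg 43);(Zpos 3);(Zpos 64);(Zneg 65);(Zpos 2);(Zpos 26);(Zneg 9);(Zneg 2);(Zpos 1)])];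
 [::lp0;lp0;lp0;lp0;lp0;lp0;lp0;lp0;lp0;lp0;lp0;lp0;lp0;((Zneg 12),[::(Zpos 1);(Zneg 1);(Zneg 2);(Zpos 2);(Zpos 1);(Zneg 1)]);((Zneg 11),[::(Zneg 1);(Zpos 1);(Zpos 1);(Zneg 1)]);lp0;lp0;lp0;lp0;((Zneg 18),[::(Zpos 2);(Zneg 4);Z0;(Zpos 4);(Zneg 2)]);((Zneg 19),[::(Zneg 1);(Zpos 1);Z0;Z0;(Zpos 1);(Zneg 1)]);((Zneg 20),[::(Zpos 1);(Zneg 1);Z0;Z0;Z0;Z0;(Zneg 1);(Zpos 1)]);((Zneg 23),[::(Zpos 1);(Zneg 3);(Zpos 2);(Zneg 2);(Zpos 6);(Zneg 3);(Zneg 6);(Zpos 8);(Zneg 3)]);((Zneg 24),[::(Zneg 1);(Zpos 1);(Zpos 9);(Zneg 20);(Zpos 4);(Zpos 21);(Zneg 15);(Zneg 2);(Zpos 3)]);((Zneg 26),[::(Zneg 1);(Zpos 4);Z0;(Zneg 10);(Zpos 4);(Zpos 7);(Zneg 3);(Zneg 1)]);((Zneg 27),[::(Zneg 2);(Zpos 1);(Zpos 10);(Zneg 11);(Zneg 2);(Zpos 8);(Zneg 4)]);((Zneg 28),[::(Zpos 2);(Zneg 5);(Zneg 6);(Zpos 12);(Zpos 6);(Zneg 15);(Zpos 1);(Zpos 10);(Zneg 4);(Zneg 2);(Zpos 1)]);((Zneg 28),[::(Zpos 6);(Zpos 3);(Zneg 17);(Zpos 5);(Zpos 11);(Zneg 11);(Zpos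 1);(Zpos 3);(Zneg 1)]);((Zneg 30),[::(Zpos 6);(Zneg 12);(Zneg 2);(Zpos 22);(Zneg 18);(Zneg 6);(Zpos 18);(Zneg 6);(Zneg 4);(Zpos 2)]);((Zneg 32),[::(Zpos 3);(Zneg 6);(Zneg 16);(Zpos 53);(Zneg 31);(Zneg 53);(Zpos 69);(Zneg 3);(Zneg 28);(Zpos 11);(Zpos 3);(Zneg 2)])];
 [::lp0;lp0;lp0;lp0;lp0;lp0;lp0;lp0;lp0;lp0;lp0;lp0;lp0;lp0;((Zneg 12),[::(Zpos 1);(Zneg 1);(Zneg 1);(Zpos 1)]);lp0;lp0;lp0;lp0;((Zneg 19),[::(Zneg 1);(Zpos 2);(Zneg 1);Z0;(Zpos 1);(Zneg 2);(Zpos 1)]);((Zneg 18),[::(Zpos 2);(Zneg 2);(Zneg 2);(Zpos 2)]);((Zneg 19),[::(Zneg 2);(Zpos 2);(Zpos 1);(Zneg 1);(Zpos 1);(Zneg 1)]);((Zneg 22),[::(Zneg 2);(Zpos 7);(Zneg 6);(Zneg 1);(Zpos 3);(Zneg 3);(Zpos 4);(Zneg 3);(Zpos 1)]);((Zneg 25),[::(Zpos 1);(Zneg 2);(Zneg 5);(Zpos 15);(Zneg 8);(Zneg 7);(Zpos 10);(Zneg 7);(Zpos 3);(Zpos 1);(Zneg 1)]);((Zneg 26),[::(Zneg 1);(Zpos 1);(Zpos 4);(Zneg 3);(Zneg 3);(Zpos 1);Z0;(Zpos 1)]);((Zneg 27),[::(Zneg 1);Z0;(Zpos 2);(Zneg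 8);(Zpos 7);(Zpos 4);(Zneg 6);(Zpos 2)]);((Zneg 28),[::(Zpos 2);(Zneg 1);(Zneg 4);(Zpos 4);(Zpos 7);(Zneg 8);(Zneg 6);(Zpos 6);(Zpos 1);(Zneg 1)]);((Zneg 29),[::(Zneg 6);(Zpos 3);(Zpos 14);(Zneg 19);(Zneg 4);(Zpos 21);(Zneg 6);(Zneg 5);(Zpos 2)]);((Zneg 31),[::(Zneg 3);(Zpos 6);(Zpos 4);(Zneg 8);(Zneg 10);(Zpos 2);(Zpos 24);(Zneg 6);(Zneg 19);(Zpos 8);(Zpos 4);(Zneg 2)]);((Zneg 32),[::(Zneg 6);(Zpos 27);(Zneg 28);(Zneg 39);(Zpos 76);(Zpos 25);(Zneg 82);(Zneg 5);(Zpos 50);(Zneg 12);(Zneg 10);(Zpos 4)])];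
 [::lp0;lp0;lp0;lp0;lp0;lp0;lp0;lp0;lp0;lp0;lp0;lp0;lp0;lp0;lp0;((Zneg 12),[::(Zpos 1);(Zneg 1);(Zneg 1);(Zpos 1)]);((Zneg 14),[::(Zneg 1);(Zpos 2);Z0;(Zneg 2);(Zpos 1)]);((Zneg 16),[::(Zpos 1);(Zneg 2);Z0;(Zpos 2);(Zneg 1)]);((Zneg 18),[::(Zpos 1);(Zneg 2);Z0;(Zpos 2);(Zneg 1)]);((Zneg 17),[::(Zneg 1);(Zpos 2);Z0;(Zneg 2);(Zpos 1)]);((Zneg 18),[::(Zpos 1);(Zneg 1);(Zneg 1);(Zpos 1)]);((Zneg 19),[::(Zneg 1);(Zpos 2);Z0;(Zneg 2);(Zpos 1)]);((Zneg 22),[::(Zneg 1);(Zpos 4);(Zneg 4);(Zneg 1);(Zpos 2);Z0;(Zpos 2);(Zneg 3);(Zpos 1)]);((Zneg 25),[::(Zpos 1);(Zneg 2);(Zneg 4);(Zpos 10);(Zneg 2);(Zneg 3);(Zpos 1);(Zneg 6);(Zpos 5);(Zpos 1);(Zneg 1)]);((Zneg 25),[::(Zneg 2);(Zpos 4);Z0;(Zneg 1);(Zneg 1);(Zneg 1);(Zpos 1)]);((Zneg 25),[::(Zneg 1);(Zneg 6);(Zpos 5);(Zpos 4);(Zneg 6);(Zpos 2)]);((Zneg 28),[::(Zpos 1);Z0;Z0;(Zpos 5);(Zneg 2);(Zneg 2);(Zneg 1);(Zpos 1)]);((Zneg 28),[::(Zneg 3);(Zneg 6);(Zpos 4);(Zneg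 1);(Zneg 1);(Zpos 1);(Zpos 6);(Zneg 3);(Zneg 2);(Zpos 1)]);((Zneg 30),[::(Zneg 3);Z0;(Zpos 7);Z0;(Zneg 29);(Zpos 24);(Zpos 27);(Zneg 32);Z0;(Zpos 8);(Zneg 2)]);((Zneg 31),[::(Zneg 6);(Zpos 15);(Zpos 11);(Zneg 71);(Zpos 57);(Zpos 67);(Zneg 116);(Zpos 39);(Zpos 23);(Zneg 18);(Zpos 3)])];
 [::lp0;lp0;lp0;lp0;lp0;lp0;lp0;lp0;lp0;lp0;lp0;lp0;lp0;lp0;lp0;lp0;((Zneg 13),[::(Zneg 1);(Zpos 1);(Zpos 1);(Zneg 1)]);lp0;((Zneg 18),[::(Zpos 1);(Zneg 3);(Zpos 1);(Zpos 5);(Zneg 5);(Zneg 1);(Zpos 3);(Zneg 1)]);((Zneg 18),[::(Zpos 1);(Zneg 1);(Zneg 1);(Zpos 1)]);((Zneg 17),[::(Zneg 1);(Zpos 2);Z0;(Zneg 2);(Zpos 1)]);((Zneg 18),[::(Zpos 2);(Zneg 4);Z0;(Zpos 4);(Zneg 2)]);((Zneg 21),[::(Zpos 2);(Zneg 9);(Zpos 10);(Zpos 4);(Zneg 12);(Zpos 5)]);((Zneg 25),[::(Zpos 1);(Zneg 4);(Zneg 3);(Zpos 23);(Zneg 14);(Zneg 20);(Zpos 19);(Zpos 1);(Zneg 3)]);((Zneg 24),[::(Zpos 5);(Zneg 11);Z0;(Zpos 11);(Zneg 4);(Zneg 2);(Zpos 1)]);((Zneg 27),[::(Zneg 1);Z0;(Zpos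 8);(Zneg 5);(Zneg 7);(Zpos 11);(Zneg 2);(Zneg 4);(Zpos 2)]);((Zneg 28),[::(Zpos 1);(Zneg 4);(Zneg 4);(Zpos 12);(Zneg 6);(Zneg 7);(Zpos 6);(Zpos 1);(Zneg 1)]);((Zneg 28),[::(Zpos 3);(Zpos 3);(Zpos 2);(Zneg 13);(Zpos 14);(Zpos 4);(Zneg 14);(Zpos 3);(Zpos 3);(Zneg 1)]);((Zneg 29),[::(Zpos 9);(Zneg 24);(Zpos 9);(Zpos 32);(Zneg 25);(Zneg 8);(Zpos 7)]);((Zneg 31),[::(Zpos 3);(Zneg 9);(Zneg 1);(Zpos 27);(Zneg 18);(Zneg 8);(Zneg 18);(Zpos 27);(Zneg 1);(Zneg 9);(Zpos 3)])];
 [::lp0;lp0;lp0;lp0;lp0;lp0;lp0;lp0;lp0;lp0;lp0;lp0;lp0;lp0;lp0;lp0;lp0;((Zneg 15),[::(Zpos 1);(Zneg 2);Z0;(Zpos 2);(Zneg 1)]);((Zneg 17),[::(Zpos 1);(Zneg 2);Z0;(Zpos 2);(Zneg 1)]);((Zneg 18),[::(Zpos 1);(Zneg 2);Z0;(Zpos 2);(Zneg 1)]);((Zneg 18),[::(Zpos 1);(Zneg 2);Z0;(Zpos 2);(Zneg 1)]);((Zneg 19),[::(Zneg 1);(Zpos 2);Z0;(Zneg 1);Z0;(Zneg 1);(Zpos 1)]);((Zneg 22),[::(Zneg 1);(Zpos 4);(Zneg 5);(Zpos 2);(Zpos 1);(Zneg 4);(Zpos 5);(Zneg 2)]);((Zneg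 23),[::(Zneg 1);(Zpos 6);(Zneg 11);(Zpos 2);(Zpos 13);(Zneg 10);(Zneg 1);(Zpos 2)]);((Zneg 26),[::(Zneg 1);(Zpos 4);(Zneg 3);(Zneg 3);(Zpos 1);(Zpos 4);(Zneg 1);(Zneg 1)]);((Zneg 27),[::(Zneg 1);(Zpos 1);(Zpos 3);(Zneg 5);(Zpos 4);(Zneg 2)]);((Zneg 28),[::(Zpos 1);(Zneg 2);(Zneg 3);(Zpos 3);(Zpos 10);(Zneg 15);(Zpos 1);(Zpos 10);(Zneg 4);(Zneg 2);(Zpos 1)]);((Zneg 28),[::(Zpos 3);(Zpos 3);(Zneg 16);(Zpos 14);(Zneg 1);(Zneg 5);(Zpos 2)]);((Zneg 30),[::(Zpos 3);(Zneg 9);(Zpos 11);(Zneg 15);(Zpos 11);(Zpos 15);(Zneg 29);(Zpos 15);(Zpos 2);(Zneg 6);(Zpos 2)]);((Zneg 31),[::(Zpos 3);(Zneg 9);(Zneg 10);(Zpos 60);(Zneg 39);(Zneg 85);(Zpos 134);(Zneg 50);(Zneg 22);(Zpos 24);(Zneg 6)])];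
 [::lp0;lp0;lp0;lp0;lp0;lp0;lp0;lp0;lp0;lp0;lp0;lp0;lp0;lp0;lp0;lp0;lp0;lp0;((Zneg 18),[::(Zpos 1);(Zneg 2);(Zneg 1);(Zpos 4);(Zneg 1);(Zneg 2);(Zpos 1)]);lp0;((Zneg 17),[::(Zneg 1);(Zpos 1);(Zpos 1);(Zneg 1)]);((Zneg 18),[::(Zpos 2);(Zneg 2);(Zneg 2);(Zpos 2)]);((Zneg 21),[::(Zpos 2);(Zneg 6);(Zpos 2);(Zpos 6);(Zneg 4)]);((Zneg 25),[::(Zpos 1);(Zneg 2);(Zneg 5);(Zpos 12);(Zpos 1);(Zneg 12);(Zpos 3);(Zpos 2)]);((Zneg 25),[::(Zneg 2);(Zpos 4);(Zpos 3);(Zneg 8);(Zpos 2);(Zpos 2);(Zneg 1)]);((Zneg 26),[::(Zneg 1);(Zneg 1);(Zpos 1);(Zneg 1);(Zneg 2);(Zpos 4);(Zneg 2)]);((Zneg 28),[::(Zpos 1);(Zpos 1);(Zneg 3);(Zpos 2);(Zpos 7);(Zneg 6);(Zneg 1);(Zpos 1)]);((Zneg 28),[::(Zneg 3);(Zneg 3);(Zpos 4);(Zneg 2);(Zneg 10);(Zpos 13);Z0;(Zneg 4);(Zpos 1)]);((Zneg 30),[::(Zneg 3);(Zpos 3);(Zpos 4);(Zneg 13);(Zpos 8);(Zneg 5);(Zpos 6);(Zpos 15);(Zneg 21);(Zpos 2);(Zpos 6);(Zneg 2)]);((Zneg 31),[::(Zneg 3);(Zpos 6);(Zpos 4);(Zneg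 8);(Zneg 34);(Zpos 53);(Zpos 38);(Zneg 98);(Zpos 45);(Zpos 15);(Zneg 18);(Zpos 4)])];
 [::lp0;lp0;lp0;lp0;lp0;lp0;lp0;lp0;lp0;lp0;lp0;lp0;lp0;lp0;lp0;lp0;lp0;lp0;lp0;((Zneg 18),[::(Zpos 1);(Zneg 2);Z0;(Zpos 2);(Zneg 1)]);lp0;lp0;((Zneg 20),[::(Zneg 1);(Zpos 3);(Zneg 2);(Zneg 2);(Zpos 3);(Zneg 1)]);((Zneg 24),[::(Zneg 1);(Zpos 2);(Zpos 3);(Zneg 9);(Zpos 2);(Zpos 8);(Zneg 5);(Zneg 1);(Zpos 1)]);((Zneg 24),[::(Zpos 3);(Zneg 7);(Zpos 3);(Zpos 3);(Zneg 2)]);((Zneg 27),[::(Zneg 1);Z0;(Zpos 7);(Zneg 6);(Zneg 6);(Zpos 10);(Zneg 4)]);((Zneg 28),[::(Zpos 1);(Zneg 3);(Zneg 3);(Zpos 9);(Zneg 4)]);((Zneg 28),[::(Zpos 3);Z0;(Zneg 1);(Zneg 9);(Zpos 12);(Zneg 6);(Zneg 1);(Zpos 3);(Zneg 1)]);((Zneg 30),[::(Zpos 3);(Zneg 3);(Zneg 13);(Zpos 37);(Zneg 29);(Zneg 21);(Zpos 47);(Zneg 21);(Zneg 6);(Zpos 8);(Zneg 2)]);((Zneg 31),[::(Zpos 6);(Zneg 27);(Zpos 43);(Zneg 15);(Zneg 42);(Zpos 74);(Zneg 75);(Zpos 47);(Zneg 2);(Zneg 17);(Zpos 10);(Zneg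 2)])];
 [::lp0;lp0;lp0;lp0;lp0;lp0;lp0;lp0;lp0;lp0;lp0;lp0;lp0;lp0;lp0;lp0;lp0;lp0;lp0;lp0;((Zneg 18),[::(Zpos 1);(Zneg 1);(Zneg 1);(Zpos 1)]);((Zneg 19),[::(Zneg 1);(Zpos 1);Z0;Z0;(Zpos 1);(Zneg 1)]);((Zneg 22),[::(Zneg 1);(Zpos 3);(Zneg 2);Z0;(Zpos 1);(Zneg 3);(Zpos 2)]);((Zneg 23),[::(Zneg 1);(Zpos 5);(Zneg 6);(Zneg 4);(Zpos 9);(Zneg 1);(Zneg 2)]);((Zneg 26),[::(Zneg 1);(Zpos 3);Z0;(Zneg 3);(Zneg 2);(Zpos 2);(Zpos 1)]);((Zneg 27),[::(Zneg 1);Z0;(Zpos 3);(Zneg 2);(Zpos 2)]);((Zneg 28),[::(Zpos 1);(Zneg 1);(Zneg 4);(Zneg 1);(Zpos 9);(Zneg 6);(Zneg 5);(Zpos 5);(Zpos 1);(Zneg 1)]);((Zneg 28),[::(Zneg 3);(Zpos 9);(Zpos 4);(Zneg 9);(Zneg 4);(Zpos 17);(Zneg 5);(Zneg 11);(Zpos 5);(Zpos 2);(Zneg 1)]);((Zneg 28),[::(Zpos 15);(Zneg 30);(Zpos 1);(Zpos 46);(Zneg 29);(Zneg 18);(Zpos 15);(Zpos 2);(Zneg 2)]);((Zneg 31),[::(Zneg 3);(Zpos 24);(Zneg 53);(Zpos 10);(Zpos 108);(Zneg 117);(Zneg 15);(Zpos 61);(Zneg 11);(Zneg 11);(Zpos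 2);(Zpos 1)])];
 [::lp0;lp0;lp0;lp0;lp0;lp0;lp0;lp0;lp0;lp0;lp0;lp0;lp0;lp0;lp0;lp0;lp0;lp0;lp0;lp0;lp0;((Zneg 18),[::(Zpos 1);(Zneg 1);(Zneg 1);(Zpos 1)]);((Zneg 21),[::(Zpos 1);(Zneg 3);(Zpos 1);(Zpos 3);(Zneg 2)]);((Zneg 23),[::(Zneg 2);(Zpos 5);(Zpos 1);(Zneg 7);(Zpos 1);(Zpos 2)]);((Zneg 27),[::(Zpos 1);(Zneg 2);(Zneg 3);(Zpos 6);(Zneg 2);Z0;(Zpos 1);(Zneg 1)]);((Zneg 28),[::(Zpos 1);(Zpos 1);(Zneg 3);(Zpos 1);(Zpos 1);(Zneg 4);(Zpos 4);(Zneg 2)]);((Zneg 29),[::(Zneg 1);Z0;(Zpos 4);(Zpos 3);(Zneg 5);(Zneg 3);(Zpos 8);(Zneg 3);(Zneg 2);(Zpos 1)]);((Zneg 29),[::(Zpos 3);(Zneg 6);(Zneg 10);(Zpos 11);(Zpos 3);(Zneg 9);(Zneg 3);(Zpos 11);(Zneg 2);(Zneg 3);(Zpos 1)]);((Zneg 29),[::(Zneg 12);(Zpos 12);(Zpos 28);(Zneg 52);(Zpos 4);(Zpos 46);(Zneg 28);(Zneg 4);(Zpos 8);(Zneg 2)]);((Zneg 31),[::(Zneg 6);(Zpos 12);(Zpos 20);(Zneg 67);(Zpos 39);(Zpos 51);(Zneg 87);(Zpos 53);(Zneg 3);(Zneg 15);(Zpos 9);(Zneg 2)])];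
 [::lp0;lp0;lp0;lp0;lp0;lp0;lp0;lp0;lp0;lp0;lp0;lp0;lp0;lp0;lp0;lp0;lp0;lp0;lp0;lp0;lp0;lp0;((Zneg 19),[::(Zpos 1);(Zneg 1);(Zneg 1);(Zpos 1)]);((Zneg 23),[::(Zpos 1);Z0;(Zneg 4);(Zpos 1);(Zpos 4);(Zneg 1);(Zneg 1)]);((Zneg 23),[::(Zneg 3);(Zpos 1);(Zpos 2)]);((Zneg 28),[::(Zpos 1);Z0;(Zneg 5);(Zpos 7);(Zpos 4);(Zneg 6);(Zpos 2)]);((Zneg 29),[::(Zneg 1);(Zpos 2);(Zpos 1);(Zneg 6);(Zpos 4);(Zneg 3);(Zneg 3);(Zpos 4);(Zpos 1);(Zneg 1)]);((Zneg 29),[::(Zpos 3);(Zneg 6);(Zneg 4);(Zpos 26);(Zneg 14);(Zneg 11);(Zpos 20);(Zneg 5);(Zneg 11);(Zpos 5);(Zpos 2);(Zneg 1)]);((Zneg 30),[::(Zneg 3);(Zpos 6);(Zneg 8);(Zpos 4);(Zpos 12);(Zneg 2);(Zneg 6);(Zneg 12);(Zpos 7);(Zpos 4);(Zneg 2)]);((Zneg 31),[::(Zneg 6);(Zpos 21);(Zneg 13);(Zneg 37);(Zpos 65);(Zpos 4);(Zneg 95);(Zpos 62);(Zpos 13);(Zneg 23);(Zpos 4);(Zpos 1)])];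
 [::lp0;lp0;lp0;lp0;lp0;lp0;lp0;lp0;lp0;lp0;lp0;lp0;lp0;lp0;lp0;lp0;lp0;lp0;lp0;lp0;lp0;lp0;lp0;((Zneg 24),[::(Zneg 1);(Zpos 2);(Zpos 2);(Zneg 4);(Zneg 1);(Zpos 2)]);((Zneg 26),[::(Zpos 2);(Zneg 4);(Zneg 6);(Zpos 12);(Zneg 1);(Zneg 4);(Zpos 1)]);((Zneg 27),[::(Zpos 2);(Zpos 2);(Zneg 7);(Zpos 1);(Zpos 8);(Zneg 8);(Zpos 2)]);((Zneg 29),[::(Zneg 1);(Zneg 2);(Zpos 5);(Zpos 3);(Zneg 11);(Zpos 6);(Zpos 1);(Zneg 1)]);((Zneg 29),[::(Zpos 3);Z0;(Zneg 7);Z0;(Zpos 17);(Zneg 18);(Zpos 1);(Zpos 6);(Zneg 2)]);((Zneg 30),[::(Zpos 3);(Zneg 12);(Zpos 2);(Zpos 16);(Zpos 14);(Zneg 40);(Zneg 2);(Zpos 42);(Zneg 25);(Zneg 4);(Zpos 8);(Zneg 2)]);((Zneg 31),[::(Zpos 3);(Zneg 21);(Zpos 32);(Zpos 43);(Zneg 134);(Zpos 33);(Zpos 152);(Zneg 153);(Zpos 29);(Zpos 34);(Zneg 22);(Zpos 4)])];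
 [::lp0;lp0;lp0;lp0;lp0;lp0;lp0;lp0;lp0;lp0;lp0;lp0;lp0;lp0;lp0;lp0;lp0;lp0;lp0;lp0;lp0;lp0;lp0;lp0;((Zneg 27),[::(Zpos 1);(Zneg 2);(Zneg 7);(Zpos 15);(Zpos 7);(Zneg 21);(Zneg 1);(Zpos 9);Z0;(Zneg 1)]);((Zneg 28),[::(Zpos 1);(Zpos 1);(Zneg 7);(Zneg 2);(Zpos 15);(Zneg 7);(Zneg 9);(Zpos 10);Z0;(Zneg 2)]);((Zneg 29),[::(Zneg 1);(Zpos 2);(Zpos 8);(Zneg 8);(Zneg 11);(Zpos 21);Z0;(Zneg 14);(Zpos 3);(Zpos 3);(Zneg 1)]);((Zneg 29),[::(Zpos 3);(Zneg 12);(Zneg 10);(Zpos 28);(Zneg 3);(Zneg 41);(Zpos 32);(Zpos 17);(Zneg 22);(Zpos 1);(Zpos 4);(Zneg 1)]);((Zneg 30),[::(Zneg 3);(Zneg 9);(Zpos 28);(Zpos 3);(Zneg 54);(Zpos 9);(Zpos 60);(Zneg 15);(Zneg 39);(Zpos 16);(Zpos 8);(Zneg 4)]);((Zneg 31),[::(Zneg 9);(Zpos 21);(Zpos 27);(Zneg 106);(Zpos 19);(Zpos 168);(Zneg 93);(Zneg 117);(Zpos 118);(Zneg 3);(Zneg 30);(Zpos 9)])];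
 [::lp0;lp0;lp0;lp0;lp0;lp0;lp0;lp0;lp0;lp0;lp0;lp0;lp0;lp0;lp0;lp0;lp0;lp0;lp0;lp0;lp0;lp0;lp0;lp0;lp0;((Zneg 28),[::(Zpos 1);(Zneg 2);(Zneg 5);(Zpos 17);(Zneg 8);(Zneg 13);(Zpos 12);Z0;(Zneg 2)]);((Zneg 29),[::(Zneg 1);(Zpos 4);(Zneg 3);(Zneg 9);(Zpos 14);(Zneg 8);(Zpos 3);(Zpos 7);(Zneg 10);(Zpos 1);(Zpos 3);(Zneg 1)]);((Zneg 29),[::(Zpos 3);(Zneg 6);(Zneg 1);(Zpos 26);(Zneg 33);(Zpos 1);(Zpos 20);(Zneg 12);Z0;(Zpos 3);(Zneg 1)]);((Zneg 29),[::(Zpos 3);(Zneg 21);(Zpos 47);(Zneg 17);(Zneg 61);(Zpos 65);(Zpos 3);(Zneg 31);(Zpos 10);(Zpos 4);(Zneg 2)]);((Zneg 30),[::(Zneg 3);(Zpos 15);(Zneg 17);(Zneg 23);(Zpos 72);(Zneg 72);(Zpos 23);(Zpos 17);(Zneg 15);(Zpos 3)])];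
 [::lp0;lp0;lp0;lp0;lp0;lp0;lp0;lp0;lp0;lp0;lp0;lp0;lp0;lp0;lp0;lp0;lp0;lp0;lp0;lp0;lp0;lp0;lp0;lp0;lp0;lp0;((Zneg 29),[::(Zneg 1);Z0;(Zpos 5);(Zneg 6);(Zneg 15);(Zpos 21);(Zpos 3);(Zneg 17);(Zpos 6);(Zpos 4);(Zneg 2)]);((Zneg 29),[::(Zpos 3);(Zneg 6);(Zpos 5);(Zpos 17);(Zneg 8);(Zneg 26);(Zpos 26);(Zpos 7);(Zneg 23);(Zpos 6);(Zpos 5);(Zneg 2)]);((Zneg 30),[::(Zpos 3);(Zneg 12);(Zpos 23);(Zneg 8);(Zneg 29);(Zpos 40);(Zneg 5);(Zneg 24);(Zpos 10);(Zpos 4);(Zneg 2)]);((Zneg 30),[::(Zpos 6);(Zneg 18);(Zpos 4);(Zpos 54);(Zneg 80);(Zpos 5);(Zpos 44);(Zneg 16);(Zneg 6);(Zpos 3)])];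
 [::lp0;lp0;lp0;lp0;lp0;lp0;lp0;lp0;lp0;lp0;lp0;lp0;lp0;lp0;lp0;lp0;lp0;lp0;lp0;lp0;lp0;lp0;lp0;lp0;lp0;lp0;lp0;((Zneg 29),[::(Zpos 6);(Zneg 9);(Zneg 11);(Zpos 27);(Zneg 6);(Zneg 26);(Zpos 24);(Zpos 6);(Zneg 16);(Zpos 3);(Zpos 3);(Zneg 1)]);((Zneg 31),[::(Zpos 3);(Zneg 9);(Zneg 4);(Zpos 30);(Zneg 20);(Zneg 30);(Zpos 46);(Zpos 4);(Zneg 31);(Zpos 7);(Zpos 6);(Zneg 2)]);((Zneg 32),[::(Zpos 6);(Zneg 36);(Zpos 67);(Zneg 3);(Zneg 137);(Zpos 140);(Zpos 32);(Zneg 126);(Zpos 50);(Zpos 24);(Zneg 19);(Zpos 1);(Zpos 1)])];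
 [::lp0;lp0;lp0;lp0;lp0;lp0;lp0;lp0;lp0;lp0;lp0;lp0;lp0;lp0;lp0;lp0;lp0;lp0;lp0;lp0;lp0;lp0;lp0;lp0;lp0;lp0;lp0;lp0;((Zneg 31),[::(Zneg 3);(Zpos 9);(Zneg 8);(Zneg 24);(Zpos 48);(Zpos 4);(Zneg 60);(Zpos 34);(Zpos 21);(Zneg 29);(Zpos 4);(Zpos 6);(Zneg 2)]);((Zneg 32),[::(Zneg 3);(Zpos 15);(Zneg 38);(Zpos 46);(Zpos 16);(Zneg 116);(Zpos 110);(Zpos 18);(Zneg 97);(Zpos 53);(Zpos 8);(Zneg 16);(Zpos 4)])];
 [::lp0;lp0;lp0;lp0;lp0;lp0;lp0;lp0;lp0;lp0;lp0;lp0;lp0;lp0;lp0;lp0;lp0;lp0;lp0;lp0;lp0;lp0;lp0;lp0;lp0;lp0;lp0;lp0;lp0;((Zneg 32),[::(Zneg 3);(Zpos 15);(Zneg 20);(Zneg 20);(Zpos 76);(Zneg 28);(Zneg 80);(Zpos 62);(Zpos 25);(Zneg 35);(Zpos 4);(Zpos 6);(Zneg 2)])]].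
Definition tB : seq (seq lp) :=
 [::[::((Zneg 1),[::(Zneg 1)]);lp0;lp0;lp0;lp0;lp0;lp0;lp0;lp0;lp0;lp0;lp0;lp0;lp0;lp0;lp0;lp0;lp0;lp0;lp0;lp0;lp0;lp0;lp0;lp0;lp0;lp0;lp0;lp0;lp0];
 [::((Zneg 1),[::(Zneg 1)]);((Zneg 1),[::(Zpos 1)]);lp0;lp0;lp0;lp0;lp0;lp0;lp0;lp0;lp0;lp0;lp0;lp0;lp0;lp0;lp0;lp0;lp0;lp0;lp0;lp0;lp0;lp0;lp0;lp0;lp0;lp0;lp0;lp0];
 [::lp0;lp0;((Zneg 1),[::(Zneg 1)]);lp0;lp0;lp0;lp0;lp0;lp0;lp0;lp0;lp0;lp0;lp0;lp0;lp0;lp0;lp0;lp0;lp0;lp0;lp0;lp0;lp0;lp0;lp0;lp0;lp0;lp0;lp0];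
 [::lp0;lp0;lp0;((Zneg 1),[::(Zpos 1);(Zneg 1)]);lp0;lp0;lp0;lp0;lp0;lp0;lp0;lp0;lp0;lp0;lp0;lp0;lp0;lp0;lp0;lp0;lp0;lp0;lp0;lp0;lp0;lp0;lp0;lp0;lp0;lp0];
 [::lp0;lp0;lp0;lp0;((Zneg 1),[::(Zneg 1);(Zpos 1)]);lp0;lp0;lp0;lp0;lp0;lp0;lp0;lp0;lp0;lp0;lp0;lp0;lp0;lp0;lp0;lp0;lp0;lp0;lp0;lp0;lp0;lp0;lp0;lp0;lp0];
 [::lp0;lp0;lp0;lp0;((Zneg 2),[::(Zpos 1);(Zneg 1)]);((Zneg 3),[::(Zneg 1);(Zpos 1);(Zpos 1);(Zneg 1)]);lp0;lp0;lp0;lp0;lp0;lp0;lp0;lp0;lp0;lp0;lp0;lp0;lp0;lp0;lp0;lp0;lp0;lp0;lp0;lp0;lp0;lp0;lp0;lp0];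
 [::lp0;lp0;lp0;lp0;lp0;lp0;((Zneg 4),[::(Zpos 1);(Zneg 1);(Zneg 1);(Zpos 1)]);lp0;lp0;lp0;lp0;lp0;lp0;lp0;lp0;lp0;lp0;lp0;lp0;lp0;lp0;lp0;lp0;lp0;lp0;lp0;lp0;lp0;lp0;lp0];
 [::lp0;lp0;lp0;lp0;lp0;lp0;lp0;((Zneg 5),[::(Zneg 1);(Zpos 1);(Zpos 1);(Zneg 1)]);lp0;lp0;lp0;lp0;lp0;lp0;lp0;lp0;lp0;lp0;lp0;lp0;lp0;lp0;lp0;lp0;lp0;lp0;lp0;lp0;lp0;lp0];
 [::lp0;lp0;lp0;lp0;lp0;lp0;((Zneg 4),[::(Zpos 1);(Zneg 1);(Zneg 1);(Zpos 1)]);lp0;((Zneg 6),[::(Zneg 1);(Zpos 1);(Zpos 1);(Zneg 1)]);lp0;lp0;lp0;lp0;lp0;lp0;lp0;lp0;lp0;lp0;lp0;lp0;lp0;lp0;lp0;lp0;lp0;lp0;lp0;lp0;lp0];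
 [::lp0;lp0;lp0;lp0;lp0;lp0;lp0;lp0;lp0;((Zneg 8),[::(Zpos 1);(Zneg 1);(Zneg 1);(Zpos 1)]);lp0;lp0;lp0;lp0;lp0;lp0;lp0;lp0;lp0;lp0;lp0;lp0;lp0;lp0;lp0;lp0;lp0;lp0;lp0;lp0];
 [::lp0;lp0;lp0;lp0;lp0;lp0;lp0;lp0;lp0;lp0;((Zneg 10),[::(Zneg 1);(Zpos 2);Z0;(Zneg 2);(Zpos 1)]);lp0;lp0;lp0;lp0;lp0;lp0;lp0;lp0;lp0;lp0;lp0;lp0;lp0;lp0;lp0;lp0;lp0;lp0;lp0];
 [::lp0;lp0;lp0;lp0;lp0;lp0;lp0;lp0;lp0;((Zneg 7),[::(Zneg 1);(Zpos 1);(Zpos 1);(Zneg 1)]);lp0;((Zneg 12),[::(Zpos 1);(Zneg 2);(Zneg 1);(Zpos 4);(Zneg 1);(Zneg 2);(Zpos 1)]);lp0;lp0;lp0;lp0;lp0;lp0;lp0;lp0;lp0;lp0;lp0;lp0;lp0;lp0;lp0;lp0;lp0;lp0];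
 [::lp0;lp0;lp0;((Zneg 1),[::(Zneg 1)]);lp0;lp0;lp0;lp0;lp0;lp0;lp0;lp0;((Zneg 12),[::(Zpos 1);(Zneg 1);(Zneg 2);(Zpos 2);(Zpos 1);(Zneg 1)]);lp0;lp0;lp0;lp0;lp0;lp0;lp0;lp0;lp0;lp0;lp0;lp0;lp0;lp0;lp0;lp0;lp0];
 [::lp0;lp0;lp0;lp0;lp0;((Zneg 2),[::(Zpos 1);(Zneg 1)]);lp0;lp0;lp0;lp0;lp0;lp0;lp0;((Zneg 12),[::(Zpos 1);(Zneg 1);(Zneg 1);(Zpos 1)]);lp0;lp0;lp0;lp0;lp0;lp0;lp0;lp0;lp0;lp0;lp0;lp0;lp0;lp0;lp0;lp0];
 [::lp0;lp0;lp0;lp0;((Zneg 2),[::(Zneg 1);(Zpos 1)]);((Zneg 3),[::(Zpos 1);(Zneg 1)]);lp0;lp0;lp0;lp0;lp0;lp0;lp0;((Zneg 11),[::(Zpos 1);(Zneg 1);(Zneg 1);(Zpos 1)]);((Zneg 12),[::(Zpos 1);(Zneg 1);(Zneg 1);(Zpos 1)]);lp0;lp0;lp0;lp0;lp0;lp0;lp0;lp0;lp0;lp0;lp0;lp0;lp0;lp0;lp0];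
 [::lp0;lp0;lp0;lp0;lp0;lp0;lp0;lp0;lp0;((Zneg 8),[::(Zpos 1);(Zneg 1);(Zneg 1);(Zpos 1)]);((Zneg 10),[::(Zneg 1);(Zpos 2);Z0;(Zneg 2);(Zpos 1)]);lp0;((Zneg 13),[::(Zpos 1);(Zneg 2);(Zneg 1);(Zpos 4);(Zneg 1);(Zneg 2);(Zpos 1)]);lp0;((Zneg 13),[::(Zpos 1);(Zneg 1);(Zneg 1);(Zpos 1)]);((Zneg 13),[::(Zneg 1);(Zpos 1);(Zpos 1);(Zneg 1)]);lp0;lp0;lp0;lp0;lp0;lp0;lp0;lp0;lp0;lp0;lp0;lp0;lp0;lp0];
 [::lp0;lp0;lp0;lp0;lp0;lp0;lp0;lp0;lp0;lp0;((Zneg 10),[::(Zneg 1);(Zpos 2);Z0;(Zneg 2);(Zpos 1)]);lp0;lp0;lp0;((Zneg 13),[::(Zpos 1);(Zneg 1);(Zneg 1);(Zpos 1)]);((Zneg 13),[::(Zneg 1);(Zpos 1);(Zpos 1);(Zneg 1)]);((Zneg 15),[::(Zpos 1);(Zneg 2);Z0;(Zpos 2);(Zneg 1)]);lp0;lp0;lp0;lp0;lp0;lp0;lp0;lp0;lp0;lp0;lp0;lp0;lp0];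
 [::lp0;lp0;lp0;lp0;lp0;lp0;lp0;lp0;lp0;((Zneg 7),[::(Zneg 1);(Zpos 1);(Zpos 1);(Zneg 1)]);lp0;((Zneg 12),[::(Zpos 1);(Zneg 2);(Zneg 1);(Zpos 4);(Zneg 1);(Zneg 2);(Zpos 1)]);lp0;((Zneg 13),[::(Zpos 1);(Zneg 1);(Zneg 2);(Zpos 2);(Zpos 1);(Zneg 1)]);((Zneg 12),[::(Zneg 1);(Zpos 1);(Zpos 1);(Zneg 1)]);((Zneg 14),[::(Zpos 1);(Zneg 1);(Zneg 1);(Zpos 1)]);((Zneg 16),[::(Zneg 1);(Zpos 2);Z0;(Zneg 2);(Zpos 1)]);((Zneg 18),[::(Zpos 1);(Zneg 2);(Zneg 1);(Zpos 4);(Zneg 1);(Zneg 2);(Zpos 1)]);lp0;lp0;lp0;lp0;lp0;lp0;lp0;lp0;lp0;lp0;lp0;lp0];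
 [::lp0;lp0;lp0;lp0;lp0;lp0;lp0;lp0;lp0;lp0;lp0;((Zneg 11),[::(Zpos 1);(Zneg 2);Z0;(Zpos 2);(Zneg 1)]);((Zneg 11),[::(Zpos 1);(Zneg 2);Z0;(Zpos 2);(Zneg 1)]);((Zneg 12),[::(Zpos 1);(Zneg 1);(Zneg 1);(Zpos 1)]);((Zneg 11),[::(Zneg 1);(Zpos 1)]);((Zneg 13),[::(Zpos 1);(Zneg 1)]);((Zneg 15),[::(Zneg 1);(Zpos 2);(Zneg 2);(Zpos 2);(Zneg 1)]);((Zneg 17),[::(Zpos 1);(Zneg 2);Z0;(Zpos 2);(Zneg 1)]);((Zneg 18),[::(Zpos 1);(Zneg 2);Z0;(Zpos 2);(Zneg 1)]);lp0;lp0;lp0;lp0;lp0;lp0;lp0;lp0;lp0;lp0;lp0];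
 [::lp0;lp0;lp0;lp0;lp0;lp0;lp0;lp0;lp0;lp0;((Zneg 9),[::(Zneg 1);(Zpos 1);(Zpos 1);(Zneg 1)]);lp0;lp0;lp0;((Zneg 12),[::(Zpos 1);Z0;(Zneg 1)]);((Zneg 12),[::(Zneg 1);Z0;(Zpos 1)]);((Zneg 14),[::(Zpos 1);(Zneg 1);(Zneg 1);(Zpos 1)]);lp0;lp0;((Zneg 18),[::(Zpos 1);(Zneg 1);(Zneg 1);(Zpos 1)]);lp0;lp0;lp0;lp0;lp0;lp0;lp0;lp0;lp0;lp0];
 [::lp0;lp0;lp0;lp0;lp0;lp0;lp0;lp0;lp0;((Zneg 7),[::(Zpos 1);(Zneg 1);(Zneg 1);(Zpos 1)]);lp0;((Zneg 10),[::(Zpos 1);(Zneg 2);Z0;(Zpos 2);(Zneg 1)]);((Zneg 12),[::(Zpos 1);(Zneg 2);Z0;(Zpos 2);(Zneg 1)]);((Zneg 11),[::(Zpos 1);(Zneg 1);(Zneg 1);(Zpos 1)]);((Zneg 10),[::(Zneg 1);(Zpos 1)]);((Zneg 12),[::(Zpos 1);(Zneg 1)]);((Zneg 14),[::(Zneg 2);(Zpos 4);(Zneg 2)]);((Zneg 16),[::(Zpos 1);(Zneg 2);Z0;(Zpos 2);(Zneg 1)]);((Zneg 17),[::(Zpos 1);(Zneg 2);Z0;(Zpos 2);(Zneg 1)]);lp0;((Zneg 18),[::(Zpos 1);(Zneg 1);(Zneg 1);(Zpos 1)]);lp0;lp0;lp0;lp0;lp0;lp0;lp0;lp0;lp0]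;
 [::lp0;lp0;lp0;lp0;lp0;lp0;lp0;((Zneg 4),[::(Zpos 1);(Zneg 1);(Zneg 1);(Zpos 1)]);lp0;lp0;lp0;lp0;lp0;lp0;((Zneg 13),[::(Zneg 1);(Zpos 2);Z0;(Zneg 2);(Zpos 1)]);((Zneg 13),[::(Zpos 1);(Zneg 2);Z0;(Zpos 2);(Zneg 1)]);((Zneg 15),[::(Zneg 1);(Zpos 3);(Zneg 2);(Zneg 2);(Zpos 3);(Zneg 1)]);((Zneg 17),[::(Zpos 1);(Zneg 2);Z0;(Zpos 2);(Zneg 1)]);((Zneg 19),[::(Zpos 1);(Zneg 2);Z0;(Zpos 2);(Zneg 1)]);((Zneg 20),[::(Zpos 1);(Zneg 2);Z0;(Zpos 2);(Zneg 1)]);lp0;((Zneg 19),[::(Zpos 1);(Zneg 1);(Zneg 1);(Zpos 1)]);lp0;lp0;lp0;lp0;lp0;lp0;lp0;lp0];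
 [::lp0;lp0;lp0;lp0;lp0;lp0;lp0;lp0;((Zneg 5),[::(Zneg 1);(Zpos 1);(Zpos 1);(Zneg 1)]);lp0;lp0;lp0;((Zneg 12),[::(Zpos 1);(Zneg 2);(Zneg 1);(Zpos 4);(Zneg 1);(Zneg 2);(Zpos 1)]);((Zneg 13),[::(Zneg 1);(Zpos 1);(Zpos 2);(Zneg 2);(Zneg 1);(Zpos 1)]);((Zneg 12),[::(Zpos 1);(Zneg 1);(Zneg 1);(Zpos 1)]);lp0;((Zneg 14),[::(Zneg 1);(Zpos 2);Z0;(Zneg 2);(Zpos 1)]);((Zneg 16),[::(Zpos 1);(Zneg 2);Z0;(Zpos 2);(Zneg 1)]);((Zneg 18),[::(Zpos 1);(Zneg 2);Z0;(Zpos 2);(Zneg 1)]);lp0;((Zneg 20),[::(Zpos 1);Z0;(Zneg 2);Z0;(Zpos 1)]);((Zneg 21),[::(Zneg 1);Z0;(Zpos 2);Z0;(Zneg 1)]);((Zneg 24),[::(Zneg 1);(Zpos 2);(Zpos 2);(Zneg 4);(Zneg 1);(Zpos 2)]);lp0;lp0;lp0;lp0;lp0;lp0;lp0];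
 [::lp0;lp0;lp0;lp0;lp0;lp0;((Zneg 3),[::(Zneg 1);(Zpos 1);(Zpos 1);(Zneg 1)]);lp0;((Zneg 5),[::(Zpos 1);(Zneg 1);(Zneg 1);(Zpos 1)]);lp0;lp0;lp0;((Zneg 13),[::(Zneg 1);(Zpos 2);(Zpos 1);(Zneg 4);(Zpos 1);(Zpos 2);(Zneg 1)]);((Zneg 12),[::(Zpos 1);(Zneg 1);(Zneg 2);(Zpos 2);(Zpos 1);(Zneg 1)]);((Zneg 11),[::(Zneg 1);(Zpos 1);(Zpos 1);(Zneg 1)]);((Zneg 13),[::(Zpos 1);(Zneg 1);(Zneg 1);(Zpos 1)]);((Zneg 15),[::(Zneg 1);(Zpos 1);(Zpos 1);(Zneg 1)]);((Zneg 17),[::(Zpos 1);(Zneg 2);(Zneg 1);(Zpos 4);(Zneg 1);(Zneg 2);(Zpos 1)]);((Zneg 20),[::(Zpos 1);(Zneg 2);(Zneg 1);(Zpos 4);(Zneg 1);(Zneg 2);(Zpos 1)]);((Zneg 19),[::(Zpos 1);(Zneg 1);(Zneg 1);(Zpos 1)]);((Zneg 19),[::(Zneg 1);(Zpos 1);(Zpos 1);(Zneg 1)]);((Zneg 20),[::(Zpos 2);(Zneg 2);(Zneg 2);(Zpos 2)]);((Zneg 23),[::(Zpos 2);(Zneg 6);(Zpos 1);(Zpos 8);(Zneg 4);(Zneg 2);(Zpos 1)]);((Zneg 27),[::(Zpos 1);(Zneg 2);(Zneg 7);(Zpos 15);(Zpos 7);(Zneg 21);(Zneg 1);(Zpos 9);Z0;(Zneg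 1)]);lp0;lp0;lp0;lp0;lp0;lp0];
 [::(Z0,[::(Zpos 1)]);(Z0,[::(Zneg 1)]);lp0;lp0;lp0;lp0;lp0;lp0;lp0;((Zneg 7),[::(Zneg 1);(Zpos 1);(Zpos 1);(Zneg 1)]);lp0;((Zneg 10),[::(Zneg 1);(Zpos 2);Z0;(Zneg 2);(Zpos 1)]);((Zneg 12),[::(Zneg 1);(Zpos 2);Z0;(Zneg 2);(Zpos 1)]);((Zneg 11),[::(Zneg 1);(Zpos 1);(Zpos 1);(Zneg 1)]);((Zneg 10),[::(Zpos 1);(Zneg 1)]);((Zneg 12),[::(Zneg 2);(Zpos 2);(Zpos 1);(Zneg 1)]);((Zneg 14),[::(Zpos 2);(Zneg 5);(Zpos 3);(Zpos 1);(Zneg 1)]);((Zneg 16),[::(Zneg 2);(Zpos 4);Z0;(Zneg 4);(Zpos 2)]);((Zneg 19),[::(Zpos 1);(Zneg 4);(Zpos 2);(Zpos 7);(Zneg 7);(Zneg 2);(Zpos 4);(Zneg 1)]);((Zneg 19),[::(Zpos 1);(Zneg 1);Z0;(Zneg 1);Z0;(Zpos 2);(Zneg 1)]);((Zneg 18),[::(Zneg 3);(Zpos 4);(Zpos 2);(Zneg 4);(Zpos 1)]);((Zneg 19),[::(Zpos 4);(Zneg 7);(Zneg 1);(Zpos 7);(Zneg 3)]);((Zneg 22),[::(Zpos 4);(Zneg 16);(Zpos 14);(Zpos 9);(Zneg 15);(Zpos 4);(Zneg 2);(Zpos 3);(Zneg 1)]);((Zneg 26),[::(Zpos 1);(Zneg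 5);(Zneg 3);(Zpos 30);(Zneg 21);(Zneg 22);(Zpos 20);(Zpos 1);(Zpos 4);(Zneg 5);(Zneg 1);(Zpos 1)]);((Zneg 28),[::(Zpos 1);(Zneg 2);(Zneg 5);(Zpos 17);(Zneg 8);(Zneg 13);(Zpos 12);Z0;(Zneg 2)]);lp0;lp0;lp0;lp0;lp0];
 [::lp0;(Z0,[::(Zpos 1)]);lp0;lp0;lp0;lp0;lp0;lp0;lp0;lp0;lp0;((Zneg 11),[::(Zneg 1);(Zpos 2);Z0;(Zneg 2);(Zpos 1)]);((Zneg 11),[::(Zneg 1);(Zpos 2);Z0;(Zneg 2);(Zpos 1)]);((Zneg 12),[::(Zneg 1);(Zpos 1);(Zpos 1);(Zneg 1)]);((Zneg 11),[::(Zpos 1);(Zneg 1)]);((Zneg 11),[::(Zneg 1);(Zpos 1)]);((Zneg 13),[::(Zpos 3);(Zneg 5);(Zpos 1);(Zpos 1)]);lp0;((Zneg 19),[::(Zpos 1);(Zneg 4);(Zpos 5);(Zpos 1);(Zneg 8);(Zpos 6);(Zpos 1);(Zneg 3);(Zpos 1)]);((Zneg 18),[::(Zneg 2);(Zpos 3);(Zpos 1);(Zneg 3);(Zpos 1)]);((Zneg 19),[::(Zpos 1);(Zneg 1);Z0;(Zneg 1);Z0;(Zpos 2);(Zneg 1)]);((Zneg 20),[::(Zneg 1);(Zpos 1);(Zneg 2);(Zpos 4);(Zpos 1);(Zneg 5);(Zpos 2)]);((Zneg 23),[::(Zneg 1);(Zpos 3);(Zneg 4);(Zpos 10);(Zneg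 12);(Zneg 5);(Zpos 16);(Zneg 8);(Zpos 1)]);((Zneg 26),[::(Zpos 1);(Zneg 4);(Zpos 4);(Zpos 12);(Zneg 35);(Zpos 16);(Zpos 29);(Zneg 28);(Zpos 2);(Zpos 4);(Zneg 1)]);((Zneg 28),[::(Zneg 1);(Zpos 3);(Zneg 1);(Zneg 5);(Zpos 3);(Zpos 11);(Zneg 6);(Zneg 11);(Zpos 6);(Zpos 2);(Zneg 1)]);((Zneg 29),[::(Zneg 1);Z0;(Zpos 5);(Zneg 6);(Zneg 15);(Zpos 21);(Zpos 3);(Zneg 17);(Zpos 6);(Zpos 4);(Zneg 2)]);lp0;lp0;lp0;lp0];
 [::lp0;lp0;(Z0,[::(Zpos 1)]);lp0;lp0;lp0;lp0;lp0;lp0;lp0;((Zneg 9),[::(Zpos 1);(Zneg 1);(Zneg 1);(Zpos 1)]);lp0;lp0;lp0;((Zneg 12),[::(Zneg 1);Z0;(Zpos 1)]);((Zneg 12),[::(Zpos 1);Z0;(Zneg 1)]);((Zneg 14),[::(Zneg 1);(Zpos 1);(Zpos 1);(Zneg 1)]);((Zneg 16),[::(Zpos 1);(Zneg 3);(Zpos 2);(Zpos 2);(Zneg 3);(Zpos 1)]);((Zneg 18),[::(Zpos 1);(Zneg 3);(Zpos 2);(Zpos 2);(Zneg 3);(Zpos 1)]);((Zneg 19),[::(Zpos 1);(Zneg 4);(Zpos 3);(Zpos 3);(Zneg 4);(Zpos 1)]);((Zneg 19),[::(Zpos 1);(Zneg 3);(Zpos 2);(Zpos 2);(Zneg 3);(Zpos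 1)]);((Zneg 20),[::(Zneg 1);(Zpos 3);(Zneg 2);(Zneg 1);(Zpos 1);(Zneg 1);(Zpos 2);(Zneg 1)]);((Zneg 23),[::(Zneg 1);(Zpos 5);(Zneg 9);(Zpos 8);(Zneg 3);(Zneg 5);(Zpos 11);(Zneg 8);(Zpos 2)]);((Zneg 25),[::(Zpos 1);(Zneg 2);(Zpos 4);(Zneg 17);(Zpos 19);(Zpos 12);(Zneg 28);(Zpos 9);(Zpos 4);(Zneg 2)]);((Zneg 27),[::(Zneg 3);(Zpos 9);(Zneg 1);(Zneg 15);(Zpos 9);(Zpos 8);(Zneg 8);Z0;(Zpos 1)]);((Zneg 29),[::(Zpos 1);(Zneg 4);(Zneg 5);(Zpos 21);(Zneg 12);(Zneg 9);(Zpos 10);(Zneg 2)]);((Zneg 29),[::(Zpos 6);(Zneg 9);(Zneg 11);(Zpos 27);(Zneg 6);(Zneg 26);(Zpos 24);(Zpos 6);(Zneg 16);(Zpos 3);(Zpos 3);(Zneg 1)]);lp0;lp0;lp0];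
 [::lp0;lp0;lp0;lp0;lp0;lp0;lp0;lp0;lp0;lp0;lp0;lp0;lp0;lp0;lp0;lp0;((Zneg 14),[::(Zpos 1);(Zneg 1);(Zneg 1);(Zpos 1)]);lp0;((Zneg 19),[::(Zneg 1);(Zpos 3);(Zneg 1);(Zneg 5);(Zpos 5);(Zpos 1);(Zneg 3);(Zpos 1)]);((Zneg 19),[::(Zneg 1);(Zpos 1);(Zpos 1);(Zneg 1)]);((Zneg 18),[::(Zpos 1);(Zneg 2);Z0;(Zpos 2);(Zneg 1)]);((Zneg 19),[::(Zneg 2);(Zpos 4);Z0;(Zneg 4);(Zpos 2)]);((Zneg 22),[::(Zneg 2);(Zpos 9);(Zneg 10);(Zneg 4);(Zpos 12);(Zneg 5)]);((Zneg 26),[::(Zneg 1);(Zpos 4);(Zpos 3);(Zneg 23);(Zpos 14);(Zpos 20);(Zneg 19);(Zneg 1);(Zpos 3)]);((Zneg 25),[::(Zneg 5);(Zpos 11);Z0;(Zneg 11);(Zpos 4);(Zpos 2);(Zneg 1)]);((Zneg 30),[::(Zneg 1);(Zpos 2);(Zpos 6);(Zneg 17);Z0;(Zpos 18);(Zneg 5);(Zneg 11);(Zpos 4);(Zpos 4);(Zneg 2)]);((Zneg 31),[::(Zpos 1);(Zneg 5);(Zpos 2);(Zpos 18);(Zneg 16);(Zneg 19);(Zpos 24);(Zpos 3);(Zneg 13);(Zpos 4);(Zpos 2);(Zneg 1)]);((Zneg 31),[::(Zneg 3);(Zpos 9);(Zneg 8);(Zneg 24);(Zpos 48);(Zpos 4);(Zneg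 60);(Zpos 34);(Zpos 21);(Zneg 29);(Zpos 4);(Zpos 6);(Zneg 2)]);lp0;lp0];
 [::lp0;lp0;lp0;lp0;lp0;lp0;lp0;lp0;lp0;lp0;lp0;lp0;lp0;lp0;lp0;((Zneg 13),[::(Zneg 1);(Zpos 1);(Zpos 1);(Zneg 1)]);((Zneg 15),[::(Zpos 1);(Zneg 2);Z0;(Zpos 2);(Zneg 1)]);((Zneg 17),[::(Zneg 1);(Zpos 2);Z0;(Zneg 2);(Zpos 1)]);((Zneg 19),[::(Zneg 1);(Zpos 2);Z0;(Zneg 2);(Zpos 1)]);((Zneg 18),[::(Zpos 1);(Zneg 2);Z0;(Zpos 2);(Zneg 1)]);((Zneg 19),[::(Zneg 1);(Zpos 1);(Zpos 1);(Zneg 1)]);((Zneg 20),[::(Zpos 1);(Zneg 2);Z0;(Zpos 2);(Zneg 1)]);((Zneg 23),[::(Zpos 1);(Zneg 4);(Zpos 4);(Zpos 1);(Zneg 2);Z0;(Zneg 2);(Zpos 3);(Zneg 1)]);((Zneg 26),[::(Zneg 1);(Zpos 2);(Zpos 4);(Zneg 10);(Zpos 2);(Zpos 3);(Zneg 1);(Zpos 6);(Zneg 5);(Zneg 1);(Zpos 1)]);((Zneg 26),[::(Zpos 2);(Zneg 4);Z0;(Zpos 1);(Zpos 1);(Zpos 1);(Zneg 1)]);((Zneg 29),[::(Zpos 1);(Zneg 2);(Zneg 5);(Zpos 18);(Zneg 2);(Zneg 18);(Zpos 8);(Zpos 6);(Zneg 4)]);((Zneg 31),[::(Zpos 1);(Zneg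 1);(Zneg 2);(Zpos 3);(Zpos 6);(Zneg 12);(Zneg 9);(Zpos 22);(Zpos 2);(Zneg 15);(Zpos 3);(Zpos 3);(Zneg 1)]);((Zneg 31),[::(Zneg 3);(Zpos 9);(Zneg 8);(Zneg 12);(Zpos 30);(Zneg 6);(Zneg 24);(Zpos 12);(Zpos 5);(Zneg 3)]);((Zneg 32),[::(Zneg 3);(Zpos 15);(Zneg 20);(Zneg 20);(Zpos 76);(Zneg 28);(Zneg 80);(Zpos 62);(Zpos 25);(Zneg 35);(Zpos 4);(Zpos 6);(Zneg 2)]);lp0];
 [::lp0;lp0;lp0;lp0;lp0;lp0;lp0;lp0;lp0;lp0;lp0;lp0;lp0;lp0;lp0;lp0;lp0;((Zneg 16),[::(Zneg 1);(Zpos 2);Z0;(Zneg 2);(Zpos 1)]);((Zneg 18),[::(Zneg 1);(Zpos 2);Z0;(Zneg 2);(Zpos 1)]);((Zneg 19),[::(Zneg 1);(Zpos 2);Z0;(Zneg 2);(Zpos 1)]);((Zneg 19),[::(Zneg 1);(Zpos 2);Z0;(Zneg 2);(Zpos 1)]);((Zneg 20),[::(Zpos 1);(Zneg 2);Z0;(Zpos 1);Z0;(Zpos 1);(Zneg 1)]);((Zneg 23),[::(Zpos 1);(Zneg 4);(Zpos 5);(Zneg 2);(Zneg 1);(Zpos 4);(Zneg 5);(Zpos 2)]);((Zneg 24),[::(Zpos 1);(Zneg 6);(Zpos 11);(Zneg 2);(Zneg 13);(Zpos 10);(Zpos 1);(Zneg 2)]);((Zneg 29),[::(Zneg 1);(Zpos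 3);(Zpos 6);(Zneg 26);(Zpos 11);(Zpos 31);(Zneg 21);(Zneg 14);(Zpos 10);(Zpos 2);(Zneg 1)]);((Zneg 30),[::(Zneg 1);Z0;(Zpos 9);(Zneg 6);(Zneg 20);(Zpos 27);(Zneg 2);(Zneg 17);(Zpos 10);(Zpos 2);(Zneg 2)]);((Zneg 31),[::(Zpos 1);(Zneg 3);(Zneg 7);(Zpos 18);(Zpos 6);(Zneg 35);(Zpos 11);(Zpos 29);(Zneg 18);(Zneg 10);(Zpos 8);(Zpos 1);(Zneg 1)]);((Zneg 31),[::(Zneg 3);(Zpos 15);(Zneg 5);(Zneg 41);(Zpos 47);(Zpos 24);(Zneg 72);(Zpos 20);(Zpos 37);(Zneg 23);(Zneg 3);(Zpos 5);(Zneg 1)]);((Zneg 32),[::(Zpos 3);(Zpos 3);(Zneg 28);(Zpos 14);(Zpos 72);(Zneg 74);(Zneg 66);(Zpos 104);(Zpos 9);(Zneg 57);(Zpos 14);(Zpos 10);(Zneg 4)]);((Zneg 33),[::(Zpos 9);(Zneg 33);(Zpos 3);(Zpos 143);(Zneg 185);(Zneg 110);(Zpos 346);(Zneg 110);(Zneg 185);(Zpos 143);(Zpos 3);(Zneg 33);(Zpos 9)])]].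
Definition dA : seq (seq lp) :=
 [::[::(Z0,[::(Zpos 1)]);lp0;lp0];
 [::lp0;(Z0,[::(Zpos 1)]);lp0];
 [::lp0;lp0;(Z0,[::(Zpos 1)])]].
Definition dAM : seq (seq lp) :=
 [::[::(Z0,[::(Zpos 1);(Zneg 1)]);lp0;lp0];
 [::lp0;(Z0,[::(Zpos 1)]);((Zpos 1),[::(Zneg 1)])];
 [::lp0;((Zpos 1),[::(Zneg 1)]);(Z0,[::(Zpos 1)])]].
Definition dU : seq (seq lp) :=
 [::[::(Z0,[::(Zpos 1)]);lp0;lp0];
 [::lp0;(Z0,[::(Zpos 1);(Zneg 1)]);((Zpos 1),[::(Zpos 1);(Zneg 1)])];
 [::lp0;lp0;(Z0,[::(Zpos 1);(Zneg 1)])]].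
Definition dB : seq (seq lp) :=
 [::[::(Z0,[::(Zpos 1);(Zneg 1)]);lp0;lp0];
 [::lp0;(Z0,[::(Zpos 1);(Zneg 1)]);lp0];
 [::lp0;((Zpos 1),[::(Zneg 1);(Zpos 1)]);(Z0,[::(Zpos 1);(Zneg 1);(Zneg 1);(Zpos 1)])]].

Definition tbl (T : seq (seq lp)) (i j : nat) : lp := nth lp0 (nth [::] T i) j.

Lemma c1 : lowF 30 (fun i j => tbl tA j i). Proof. by vm_compute. Qed.
Lemma c2 : lowF 30 (fun i j => tbl tU j i). Proof. by vm_compute. Qed.
Lemma c3 : lowF 30 (tbl tB). Proof. by vm_compute. Qed.
Lemma c4 : eqF 30 (prodF 30 (tbl tA) MF) (tbl tAM). Proof. by vm_compute. Qed.
Lemma c5 : eqF 30 (prodF 30 (tbl tAM) (tbl tU)) (tbl tB). Proof. by vm_compute. Qed.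

Definition DF : nat -> nat -> lp := addF idF (oppF (letF 0 false)).
Lemma d1 : lowF 3 (fun i j => tbl dA j i). Proof. by vm_compute. Qed.
Lemma d2 : lowF 3 (fun i j => tbl dU j i). Proof. by vm_compute. Qed.
Lemma d3 : lowF 3 (tbl dB). Proof. by vm_compute. Qed.
Lemma d4 : eqF 3 (prodF 3 (tbl dA) DF) (tbl dAM). Proof. by vm_compute. Qed.
Lemma d5 : eqF 3 (prodF 3 (tbl dAM) (tbl dU)) (tbl dB). Proof. by vm_compute. Qed.

Lemma den_eq : 1 - repgen (fun g => rho (alpha g)) K_phi ord0 = mxF 3 DF.
Proof. by rewrite repgen_letF /DF mxF_add mxF_opp mxF_id. Qed.

Lemma wada_eq : wada K_rels (fun g => rho (alpha g)) K_phi = \det (mxF 30 MF) / \det (mxF 3 DF).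
Proof. by rewrite /wada block_eq det_castmx den_eq. Qed.

Definition PQ (l : seq Z) : {poly rat} := Poly (map (fun a => (int_of_Z a)%:~R : rat) l).
Lemma evP_PQ l : evP l = tofrac (PQ l).
Proof.
elim: l => [|a l IH] /=; first by rewrite /PQ /= tofrac0.
rewrite /PQ /= cons_poly_def tofracD tofracM -/(PQ l) -IH !rmorph_int /za.
by rewrite addrC mulrC.
Qed.

Definition lastnz (l : seq Z) := negb (Z.eqb (last Z0 l) Z0).
Lemma int_of_Z_neq0 x : x <> Z0 -> (int_of_Z x)%:~R != 0 :> rat.
Proof.
move=> hx; rewrite intr_eq0; apply/eqP => /(congr1 Z_of_int); rewrite int_of_ZK => h.
by apply: hx; rewrite h.
Qed.
Lemma evP_neq0 l : lastnz l -> evP l != 0.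
Proof.
move=> h; rewrite evP_PQ tofrac_eq0 /PQ.
have hl : last 0 (map (fun a => (int_of_Z a)%:~R : rat) l) != 0.
  have -> : last 0 (map (fun a => (int_of_Z a)%:~R : rat) l) = (int_of_Z (last Z0 l))%:~R.
    by rewrite -(last_map (fun a => (int_of_Z a)%:~R : rat)).
  apply: int_of_Z_neq0.
  by move=> e; move: h; rewrite /lastnz e.
apply/eqP => H; move: (PolyK hl); rewrite H polyseq0 => /(congr1 size); rewrite size_map /=.
by case: l h {hl H}.
Qed.
Lemma evL_neq0 p : lastnz p.2 -> evL p != 0.
Proof.
move=> h; rewrite /evL; apply: mulf_neq0; first exact: (expfz_neq0 _ tQ_neq0).
exact: evP_neq0.
Qed.

Definition Y1 := diagprod 30 (tbl tB).
Definition A1 := diagprod 30 (tbl tA).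
Definition U1 := diagprod 30 (tbl tU).
Definition Y2 := diagprod 3 (tbl dB).
Definition A2 := diagprod 3 (tbl dA).
Definition U2 := diagprod 3 (tbl dU).
Definition zD : seq Z := [:: Zpos 3; Zneg 11; Zpos 17; Zneg 11; Zpos 3].
Definition zF : seq Z := [:: Zpos 3; Z0; Zneg 13; Z0; Zpos 13; Z0; Zneg 3].
Definition tm1 : lp := (Z0, [:: Zneg 1; Zpos 1]).
Definition m36 : lp := (Zneg 36, [:: Zneg 1]).

Lemma cert30 : \det (mxF 30 MF) * (evL A1 * evL U1) = evL Y1.
Proof. exact: det_cert c1 c2 c3 c4 c5. Qed.
Lemma cert3 : \det (mxF 3 DF) * (evL A2 * evL U2) = evL Y2.
Proof. exact: det_cert d1 d2 d3 d4 d5. Qed.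

Lemma ident : lpeqb (lpmul (lpmul (lpmul Y1 A2) U2) tm1)
  (lpmul (lpmul (lpmul (lpmul m36 (lpmul (Z0, zD) (Z0, zF))) A1) U1) Y2).
Proof. by vm_compute. Qed.
Lemma h1 : lastnz A1.2. Proof. by vm_compute. Qed.
Lemma h2 : lastnz U1.2. Proof. by vm_compute. Qed.
Lemma h3 : lastnz A2.2. Proof. by vm_compute. Qed.
Lemma h4 : lastnz U2.2. Proof. by vm_compute. Qed.
Lemma h5 : lastnz Y2.2. Proof. by vm_compute. Qed.
Lemma h6 : lastnz tm1.2. Proof. by vm_compute. Qed.

Lemma evL_Z0 l : evL (Z0, l) = evP l.
Proof. by rewrite /evL /= expr0z mul1r. Qed.

Lemma polyQ_Z (s : seq int) (l : seq Z) : s = map int_of_Z l -> last 0 s != 0 ->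
  polyQ (Poly s) = evP l.
Proof.
move=> -> hl; rewrite /polyQ map_polyE (PolyK hl) evP_PQ /PQ -map_comp.
by congr (tofrac (Poly _)); apply: eq_map => x.
Qed.

Lemma polyQ_D : polyQ DeltaK = evL (Z0, zD).
Proof. by rewrite evL_Z0; apply: polyQ_Z. Qed.
Lemma polyQ_F : polyQ Fac2 = evL (Z0, zF).
Proof. by rewrite evL_Z0; apply: polyQ_Z. Qed.
Lemma tm1E : evL tm1 = tQ - 1.
Proof.
rewrite evL_Z0 /= -[Zneg 1]/(Z.opp (Zpos 1)) zaN za1 mulr0 addr0 mulr1.
by rewrite addrC.
Qed.
Lemma m36E : evL m36 = (-1) ^+ true * tQ ^ (int_of_Z (Zneg 36)).
Proof.
rewrite /evL /= -[Zneg 1]/(Z.opp (Zpos 1)) zaN za1 mulr0 addr0 expr1.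
by rewrite mulrN1 mulN1r.
Qed.

Lemma final_alg (K : fieldType) (d1 d2 a1 u1 y1 a2 u2 y2 D F T w : K) :
  a1 != 0 -> u1 != 0 -> a2 != 0 -> u2 != 0 -> y2 != 0 -> T != 0 ->
  d1 * (a1 * u1) = y1 -> d2 * (a2 * u2) = y2 ->
  y1 * a2 * u2 * T = w * (D * F) * a1 * u1 * y2 ->
  d1 / d2 = w * (D * F / T).
Proof.
move=> ha1 hu1 ha2 hu2 hy2 hT e1 e2 e3.
have hd2 : d2 != 0 by apply: contraNneq hy2 => h; rewrite -e2 h mul0r.
have -> : d1 = y1 / (a1 * u1) by rewrite -e1 (mulfK (mulf_neq0 ha1 hu1)).
have -> : d2 = y2 / (a2 * u2) by rewrite -e2 (mulfK (mulf_neq0 ha2 hu2)).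
have -> : y1 = w * (D * F) * a1 * u1 * y2 / (a2 * u2 * T).
  have hX := mulf_neq0 (mulf_neq0 ha2 hu2) hT.
  apply: (mulIf hX); rewrite (divfK hX) -e3; ring.
by field; rewrite ?ha1 ?hu1 ?ha2 ?hu2 ?hy2 ?hT.
Qed.

Lemma evL_ident (a b c d e f g h i j : lp) :
  lpeqb (lpmul (lpmul (lpmul a b) c) d) (lpmul (lpmul (lpmul (lpmul e (lpmul f g)) h) i) j) ->
  evL a * evL b * evL c * evL d = evL e * (evL f * evL g) * evL h * evL i * evL j.
Proof. by move/evL_eq; rewrite !evL_mul. Qed.

Arguments final_alg {K d1 d2 a1 u1 y1 a2 u2 y2 D F T w}.

Definition wtarget := (-1) ^+ true * tQ ^ (int_of_Z (Zneg 36)).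

Lemma wada_val : wada K_rels (fun g => rho (alpha g)) K_phi =
  wtarget * (polyQ DeltaK * polyQ Fac2 / (tQ - 1)).
Proof.
rewrite wada_eq polyQ_D polyQ_F -tm1E /wtarget -m36E.
apply: (final_alg (evL_neq0 _ h1) (evL_neq0 _ h2) (evL_neq0 _ h3) (evL_neq0 _ h4)
  (evL_neq0 _ h5) (evL_neq0 _ h6) cert30 cert3).
exact: (evL_ident _ _ _ _ _ _ _ _ _ _ ident).
Qed.


Lemma Fac2_0 : Fac2.[0] = 3.
Proof. by rewrite horner_coef0 /Fac2 coef_Poly. Qed.

Lemma compN0 (f : {poly int}) : (f \Po - 'X).[0] = f.[0].
Proof. by rewrite horner_comp hornerN hornerX oppr0. Qed.

Lemma sq3 (z c : int) : (c = 1 \/ c = -1) -> 3 = c * (z * z) -> False.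
Proof.
have : (z <= -2) \/ (z = -1) \/ (z = 0) \/ (z = 1) \/ (2 <= z) by lia.
case=> [h|[->|[->|[->|h]]]]; case=> -> //; nia.
Qed.

Lemma X_neq0 : ('X : {poly int}) != 0.
Proof. by rewrite polyX_eq0. Qed.

Lemma no_sol n : forall (f : {poly int}) (c : int) (b : nat),
  (c = 1 \/ c = -1) -> Fac2 * 'X^n = c%:P * 'X^b * (f * (f \Po - 'X)) -> False.
Proof.
elim/ltn_ind: n => n IH f c b hc E.
have E0 := congr1 (fun p => p.[0]) E; move: E0 => /=.
rewrite !hornerM !hornerXn hornerC compN0 Fac2_0.
case: n IH E => [|n] IH E.
  case: b E => [|b] E; rewrite ?expr0 ?mulr1 ?mul1r.
    move=> h; apply: (sq3 (f.[0]) c hc); rewrite h; ring.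
  by rewrite exprS mul0r mulr0 mul0r.
case: b E => [|b] E; last first.
  move=> _; apply: (IH n (ltnSn n) f c b hc).
  apply: (mulIf X_neq0); move: E; rewrite !exprSr.
  by rewrite !mulrA => ->; ring.
rewrite exprS mul0r mulr0 expr0 mulr1 => /esym /eqP.
rewrite mulf_eq0 => /orP [/eqP c0|].
  by case: hc; rewrite c0.
rewrite mulf_eq0 orbb => /eqP f0.
have : root f 0 by rewrite /root f0.
case/factor_theorem => h fE.
apply: (IH n (ltnSn n) h (- c) 1%N).
  by case: hc => ->; [right | left; rewrite opprK].
apply: (mulIf X_neq0); rewrite -[Fac2 * 'X^n * 'X]mulrA -exprSr; move: E; rewrite fE polyC0 subr0 comp_polyM comp_polyX => ->.
rewrite polyCN expr0 expr1.
ring.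
Qed.

Definition applyw (n : 'Z_3) (s : seq nat) : 'Z_3 :=
  foldl (fun m k => reflf (inZp (nth 0%N cs k)) m) n s.

Lemma evalD_app (w : word 11) (n : 'Z_3) :
  evalD alpha w n = applyw n (map (fun l => nat_of_ord l.1) w).
Proof.
elim: w n => [|l w IH] n /=; first by rewrite perm1.
rewrite permM IH; congr applyw.
by case: l.2; rewrite ?reflV reflE.
Qed.

Lemma rel_check : all (fun r => all (fun k => applyw (inZp k) (map fst (nth [::] relsN r)) == inZp k)
  (iota 0 3)) (iota 0 10).
Proof. by vm_compute. Qed.

Lemma rels_ok (r : 'I_10) : evalD alpha (K_rels r) = 1%g.
Proof.
apply/permP => n; rewrite perm1 evalD_app.
have -> : map (fun l => nat_of_ord l.1) (K_rels r) = map fst (nth [::] relsN r).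
  by rewrite -relsN_ok -map_comp.
rewrite -[n]valZpK.
move/allP: rel_check => /(_ r); rewrite mem_iota ltn_ord => /(_ isT) /allP /(_ n).
by rewrite mem_iota /= => /(_ (ltn_ord n)) /eqP.
Qed.

Lemma card_D3 : #|[set: D3]| = 6%N.
Proof. by rewrite cardsT card_Sn. Qed.

Definition sigp (p : D3) : 'Z_3 * 'Z_3 := (p (inZp 0), p (inZp 1)).

Lemma surj : <<[set alpha g | g : 'I_11]>>%g = [set: D3]%g.
Proof.
set H := <<_>>%g.
pose r0 := alpha (inord 0); pose r1 := alpha (inord 1); pose r2 := alpha (inord 3).
have hr0 : r0 \in H by apply: mem_gen; apply: imset_f.
have hr1 : r1 \in H by apply: mem_gen; apply: imset_f.
have hr2 : r2 \in H by apply: mem_gen; apply: imset_f.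
pose L := [:: r0; r1; r2; (r0 * r0)%g; (r0 * r1)%g; (r0 * r2)%g].
have sLH : {subset L <= H}.
  move=> x; rewrite !inE => /or4P [| | |/or3P [| |]] /eqP ->; rewrite ?groupM //.
have uL : uniq L.
  apply: (@map_uniq _ _ sigp).
  rewrite /L /= /sigp !permM /r0 /r1 /r2 /alpha !reflE !inordK //.
apply/eqP; rewrite eqEcard subsetT card_D3.
have := card_uniqP uL; rewrite /= => <-.
apply: subset_leq_card; apply/subsetP => x; exact: sLH.
Qed.

Lemma polyQM p q : polyQ (p * q) = polyQ p * polyQ q.
Proof. by rewrite /polyQ rmorphM tofracM. Qed.
Lemma polyQX : polyQ 'X = tQ.
Proof. by rewrite /polyQ map_polyX. Qed.
Lemma polyQXn n : polyQ ('X^n) = tQ ^+ n.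
Proof.
elim: n => [|n IH]; first by rewrite !expr0 /polyQ rmorph1 tofrac1.
by rewrite !exprS polyQM IH polyQX.
Qed.
Lemma polyQC c : polyQ (c%:P) = c%:~R.
Proof. by rewrite /polyQ map_polyC /= !rmorph_int. Qed.
Lemma polyQ_inj : injective polyQ.
Proof.
move=> p q /eqP; rewrite /polyQ tofrac_eq => /eqP.
apply: map_inj_poly => //; exact: intr_inj.
Qed.

Lemma fld {K : fieldType} {t D F T f g : K} {s : bool} {k k0 : int} :
  t != 0 -> D != 0 -> T != 0 -> T = t - 1 ->
  (-1) ^+ true * t ^ k0 * (D * F / T) = (-1) ^+ s * t ^ k * (D / (1 - t) * f * g) ->
  F = (-1) ^+ s * t ^ (k - k0) * (f * g).
Proof.
move=> ht hD hT eT H.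
have e1 : 1 - t = - T by rewrite eT opprB.
rewrite e1 expr1 in H.
rewrite expfzDr // -invr_expz.
have hu : t ^ k0 != 0 := expfz_neq0 _ ht.
move: H hu; set u := t ^ k0; set v := t ^ k; set w := (-1) ^+ s => H hu.
have -> : F = (-1 * u * (D * F / T)) * T / (-1 * u * D).
  by field; rewrite ?hD ?hu ?hT ?oppr_eq0 ?oner_eq0.
rewrite H; field; by rewrite ?hD ?hu ?hT ?oppr_eq0 ?oner_eq0.
Qed.

Lemma hDz : lastnz zD. Proof. by vm_compute. Qed.

Lemma sign_cases (s : bool) : ((-1) ^+ s : int) = 1 \/ ((-1) ^+ s : int) = -1.
Proof. by case: s; [right | left]. Qed.

Lemma nof : ~ (exists f : {poly int},
  eqdot (wada K_rels (fun g => rho (alpha g)) K_phi)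
        (polyQ DeltaK / (1 - tQ) * polyQ f * polyQ (f \Po - 'X))).
Proof.
case=> f [s [k H]]; rewrite wada_val /wtarget in H.
have hD : polyQ DeltaK != 0 by rewrite polyQ_D; exact: (evL_neq0 (Z0, zD) hDz).
have hT : tQ - 1 != 0 by rewrite -tm1E; exact: (evL_neq0 tm1 h6).
have E := fld tQ_neq0 hD hT (erefl (tQ - 1)) H.
move: E; case: (k - int_of_Z (Zneg 36)) => [b|a] E.
  apply: (@no_sol 0 f ((-1) ^+ s) b (sign_cases s)); apply: polyQ_inj.
  rewrite !polyQM !polyQXn polyQC expr0 mulr1 E.
  by rewrite rmorph_sign.
apply: (@no_sol a.+1 f ((-1) ^+ s) 0 (sign_cases s)); apply: polyQ_inj.
rewrite !polyQM !polyQXn polyQC expr0 mulr1 E rmorph_sign NegzE -invr_expz.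
by rewrite mulrAC (divfK (expfz_neq0 (a.+1)%:Z tQ_neq0)).

Qed.

Theorem theorem1p2 :
  exists alpha : 'I_11 -> D3,
    (forall r : 'I_10, evalD alpha (K_rels r) = 1%g) /\
    (<<[set alpha g | g : 'I_11]>>%g = [set: D3]%g) /\
    eqdot (wada K_rels (fun g => rho (alpha g)) K_phi)
          (polyQ DeltaK * polyQ Fac2 / (tQ - 1)) /\
    ~ (exists f : {poly int},
         eqdot (wada K_rels (fun g => rho (alpha g)) K_phi)
               (polyQ DeltaK / (1 - tQ) * polyQ f * polyQ (f \Po - 'X))).
Proof.
exists alpha; split; first exact: rels_ok.
split; first exact: surj.
split; last exact: nof.
exists true, (int_of_Z (Zneg 36)); rewrite wada_val /wtarget.
by rewrite mulrA.
Qed.
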